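(* Let $\mathcal K$ be a 2-category and $\{\lambda_{i,j}:s_js_i\to s_is_j\}_{0\le i<j\le 2}$ a 0-cell of $\mathsf{Wdl}^{(2)}(\overline{\mathcal K})$. Then $\varphi^1_{0,2}:=\bar\lambda_{012}.s_0\eta_1s_2:s_0s_2\to s_0s_1s_2$ is a homomorphism of monads in $\overline{\mathcal K}$ from $(s_0s_2,\bar\lambda_{02})$ to $(s_0s_1s_2,\bar\lambda_{012})$; equivalently, $((A,1_{1_A}),\varphi^1_{0,2})$ is a 1-cell $(A,(s_0s_1s_2,\bar\lambda_{012}))\to(A,(s_0s_2,\bar\lambda_{02}))$ in $\mathsf{Mnd}(\overline{\mathcal K})$.
   Context: Conventions. For 1-cells, $uw$ is the horizontal composite ($w$ first); for 2-cells $\alpha,\beta$, $\alpha\beta$ is their horizontal composite; a 1-cell next to a 2-cell means whiskering; $\alpha.\beta$ is vertical composition ($\beta$ first). A monad $(A,t)$ has multiplication $\mu:tt\to t$, unit $\eta:1_A\to t$; indices carry over. Local idempotent closure $\overline{\mathcal K}$: same 0-cells as $\mathcal K$; 1-cells are pairs $(v,\bar v)$ with $v$ a 1-cell of $\mathcal K$ and $\bar v$ an idempotent 2-cell on $v$; 2-cells $(v,\bar v)\to(v',\bar v')$ are 2-cells $\omega:v\to v'$ of $\mathcal K$ with $\bar v'.\omega=\omega=\omega.\bar v$; compositions from $\mathcal K$, identity 2-cell of $(v,\bar v)$ is $\bar v$. Monads $(A,(t,\bar t))$ in $\overline{\mathcal K}$ satisfy $\mu.t\eta=\mu.\eta t=\bar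 t$; we write just $t$. A homomorphism of monads $\varphi:(t,\bar t)\to(r,\bar r)$ on $A$ is a 2-cell of $\overline{\mathcal K}$ with $\varphi.\mu_t=\mu_r.\varphi\varphi$, $\varphi.\eta_t=\eta_r$. $\mathsf{Mnd}(\overline{\mathcal K})$: 1-cells $(A,t)\to(A',t')$ are $(v,\psi)$, $\psi:t'v\to vt$ in $\overline{\mathcal K}$, with $\psi.\mu'v=v\mu.\psi t.t'\psi$, $\psi.\eta'v=v\eta$. Weak distributive law in $\overline{\mathcal K}$: monads $(A,t),(A,s)$ and $\lambda:ts\to st$ in $\overline{\mathcal K}$ with $\lambda.\mu s=s\mu.\lambda t.t\lambda$, $\lambda.t\mu=\mu t.s\lambda.\lambda s$, $\lambda.\eta s=\mu t.s\lambda.st\eta.s\eta$, $\lambda.t\eta=s\mu.\lambda t.\eta st.\eta t$; idempotent $\bar\lambda:=\mu t.s\lambda.st\eta$. A 0-cell of $\mathsf{Wdl}^{(2)}(\overline{\mathcal K})$: monads $(A,s_0),(A,s_1),(A,s_2)$ in $\overline{\mathcal K}$ and weak distributive laws $\lambda_{i,j}:s_js_i\to s_is_j$ with $\lambda_{0,1}s_2.s_1\lambda_{0,2}.\lambda_{1,2}s_0=s_0\lambda_{1,2}.\lambda_{0,2}s_1.s_2\lambda_{0,1}$; $\bar\lambda_{ij}$ is the idempotent of $\lambda_{i,j}$. Monads: $(s_0s_2,\bar\lambda_{02})$ has multiplication $\mu_0\mu_2.s_0\lambda_{0,2}s_2$ and unit $\lambda_{0,2}.\eta_2\eta_0$. Define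 $\bar\lambda_{012}:=\overleftarrow\lambda_{0,1,2}.\bar\lambda_{01}s_2$ with $\overleftarrow\lambda_{0,1,2}:=s_0s_1\mu_2.s_0\lambda_{1,2}s_2.\lambda_{0,2}s_1s_2.\eta_2s_0s_1s_2$; $(s_0s_1s_2,\bar\lambda_{012})$ has multiplication $\bar\lambda_{012}.\mu_0\mu_1\mu_2.s_0s_0\lambda_{1,2}s_2.s_0\lambda_{0,1}s_2s_1s_2.s_0s_1\lambda_{0,2}s_1s_2$ and unit $\bar\lambda_{012}.s_0\lambda_{1,2}.\lambda_{0,2}s_1.s_2\lambda_{0,1}.\eta_2\eta_1\eta_0$. *)

(* Defs.v *)
(* Conventions (as in the paper):
     comp1 u w  = uw           (w first)
     hcomp a b  = ab           (horizontal composite)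
     vcomp a b  = a.b          (b first)                                   *)

Record TwoCat := {
  obj : Type;
  hom : obj -> obj -> Type;
  cell : obj -> obj -> Type;
  src : forall A B, cell A B -> hom A B;
  tgt : forall A B, cell A B -> hom A B;
  id1 : forall A, hom A A;
  comp1 : forall A B C, hom B C -> hom A B -> hom A C;
  id2 : forall A B, hom A B -> cell A B;
  vcomp : forall A B, cell A B -> cell A B -> cell A B;
  hcomp : forall A B C, cell B C -> cell A B -> cell A C;

  comp1_assoc : forall A B C D (u : hom C D) (v : hom B C) (w : hom A B),
      comp1 _ _ _ (comp1 _ _ _ u v) w = comp1 _ _ _ u (comp1 _ _ _ v w);
  comp1_id_l : forall A B (u : hom A B), comp1 _ _ _ (id1 B) u = u;
  comp1_id_r : forall A B (u : hom A B), comp1 _ _ _ u (id1 A) = u;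

  src_id2 : forall A B (u : hom A B), src _ _ (id2 _ _ u) = u;
  tgt_id2 : forall A B (u : hom A B), tgt _ _ (id2 _ _ u) = u;
  src_vcomp : forall A B (a b : cell A B), tgt _ _ b = src _ _ a ->
      src _ _ (vcomp _ _ a b) = src _ _ b;
  tgt_vcomp : forall A B (a b : cell A B), tgt _ _ b = src _ _ a ->
      tgt _ _ (vcomp _ _ a b) = tgt _ _ a;
  vcomp_assoc : forall A B (a b c : cell A B),
      tgt _ _ c = src _ _ b -> tgt _ _ b = src _ _ a ->
      vcomp _ _ a (vcomp _ _ b c) = vcomp _ _ (vcomp _ _ a b) c;
  vcomp_id_l : forall A B (a : cell A B), vcomp _ _ (id2 _ _ (tgt _ _ a)) a = a;
  vcomp_id_r : forall A B (a : cell A B), vcomp _ _ a (id2 _ _ (src _ _ a)) = a;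

  src_hcomp : forall A B C (a : cell B C) (b : cell A B),
      src _ _ (hcomp _ _ _ a b) = comp1 _ _ _ (src _ _ a) (src _ _ b);
  tgt_hcomp : forall A B C (a : cell B C) (b : cell A B),
      tgt _ _ (hcomp _ _ _ a b) = comp1 _ _ _ (tgt _ _ a) (tgt _ _ b);
  hcomp_assoc : forall A B C D (a : cell C D) (b : cell B C) (c : cell A B),
      hcomp _ _ _ (hcomp _ _ _ a b) c = hcomp _ _ _ a (hcomp _ _ _ b c);
  hcomp_id_l : forall A B (a : cell A B), hcomp _ _ _ (id2 _ _ (id1 B)) a = a;
  hcomp_id_r : forall A B (a : cell A B), hcomp _ _ _ a (id2 _ _ (id1 A)) = a;
  hcomp_id2 : forall A B C (u : hom B C) (w : hom A B),
      hcomp _ _ _ (id2 _ _ u) (id2 _ _ w) = id2 _ _ (comp1 _ _ _ u w);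
  interchange : forall A B C (a a' : cell B C) (b b' : cell A B),
      tgt _ _ a' = src _ _ a -> tgt _ _ b' = src _ _ b ->
      hcomp _ _ _ (vcomp _ _ a a') (vcomp _ _ b b')
      = vcomp _ _ (hcomp _ _ _ a b) (hcomp _ _ _ a' b')
}.

Arguments hom {_} A B.
Arguments cell {_} A B.
Arguments src {_ A B} _.
Arguments tgt {_ A B} _.
Arguments id1 {_} A.
Arguments comp1 {_ A B C} _ _.
Arguments id2 {_ A B} _.
Arguments vcomp {_ A B} _ _.
Arguments hcomp {_ A B C} _ _.

Section Kbar.
Context {K : TwoCat}.

(* (v, e) is a 1-cell of the local idempotent closure: e idempotent 2-cell on v *)
Definition idem {A B : obj K} (v : hom A B) (e : cell A B) : Prop :=
  src e = v /\ tgt e = v /\ vcomp e e = e.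

(* w is a 2-cell (v, e) -> (v', e') of the local idempotent closure *)
Definition bar_cell {A B : obj K} (v : hom A B) (e : cell A B)
    (v' : hom A B) (e' : cell A B) (w : cell A B) : Prop :=
  src w = v /\ tgt w = v' /\ vcomp e' w = w /\ vcomp w e = w.

(* (A,(t,tb)) with multiplication mu and unit eta is a monad in Kbar.
   Whiskering by a Kbar 1-cell (t,tb) is horizontal composition with its
   identity 2-cell tb. *)
Definition bar_monad {A : obj K} (t : hom A A) (tb mu eta : cell A A) : Prop :=
  idem t tb /\
  bar_cell (comp1 t t) (hcomp tb tb) t tb mu /\
  bar_cell (id1 A) (id2 (id1 A)) t tb eta /\
  vcomp mu (hcomp mu tb) = vcomp mu (hcomp tb mu) /\
  vcomp mu (hcomp tb eta) = tb /\
  vcomp mu (hcomp eta tb) = tb.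

Definition wdl {A : obj K} (t : hom A A) (tb mut etat : cell A A)
    (s : hom A A) (sb mus etas : cell A A) (lam : cell A A) : Prop :=
  bar_monad t tb mut etat /\ bar_monad s sb mus etas /\
  bar_cell (comp1 t s) (hcomp tb sb) (comp1 s t) (hcomp sb tb) lam /\
  vcomp lam (hcomp mut sb)
    = vcomp (hcomp sb mut) (vcomp (hcomp lam tb) (hcomp tb lam)) /\
  vcomp lam (hcomp tb mus)
    = vcomp (hcomp mus tb) (vcomp (hcomp sb lam) (hcomp lam sb)) /\
  vcomp lam (hcomp etat sb)
    = vcomp (hcomp mus tb) (vcomp (hcomp sb lam)
        (vcomp (hcomp sb (hcomp tb etas)) (hcomp sb etat))) /\
  vcomp lam (hcomp tb etas)
    = vcomp (hcomp sb mut) (vcomp (hcomp lam tb)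
        (vcomp (hcomp etat (hcomp sb tb)) (hcomp etas tb))).

Definition wdl_idem {A : obj K} (tb : cell A A) (sb mus etas : cell A A)
    (lam : cell A A) : cell A A :=
  vcomp (hcomp mus tb) (vcomp (hcomp sb lam) (hcomp sb (hcomp tb etas))).

Definition monad_hom {A : obj K} (t : hom A A) (tb mut etat : cell A A)
    (r : hom A A) (rb mur etar : cell A A) (phi : cell A A) : Prop :=
  bar_cell t tb r rb phi /\
  vcomp phi mut = vcomp mur (hcomp phi phi) /\
  vcomp phi etat = etar.

Definition mnd_1cell {A A' : obj K}
    (t : hom A A) (tb mu eta : cell A A)
    (t' : hom A' A') (tb' mu' eta' : cell A' A')
    (v : hom A A') (vb : cell A A') (psi : cell A A') : Prop :=
  idem v vb /\
  bar_cell (comp1 t' v) (hcomp tb' vb) (comp1 v t) (hcomp vb tb) psi /\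
  vcomp psi (hcomp mu' vb)
    = vcomp (hcomp vb mu) (vcomp (hcomp psi tb) (hcomp tb' psi)) /\
  vcomp psi (hcomp eta' vb) = hcomp vb eta.

Record wdl2_data (A : obj K) := {
  s0 : hom A A; b0 : cell A A; m0 : cell A A; e0 : cell A A;
  s1 : hom A A; b1 : cell A A; m1 : cell A A; e1 : cell A A;
  s2 : hom A A; b2 : cell A A; m2 : cell A A; e2 : cell A A;
  l01 : cell A A;  (* lambda_{0,1} : s1 s0 -> s0 s1 *)
  l02 : cell A A;  (* lambda_{0,2} : s2 s0 -> s0 s2 *)
  l12 : cell A A   (* lambda_{1,2} : s2 s1 -> s1 s2 *)
}.

Arguments s0 {A} _. Arguments b0 {A} _. Arguments m0 {A} _. Arguments e0 {A} _.
Arguments s1 {A} _. Arguments b1 {A} _. Arguments m1 {A} _. Arguments e1 {A} _.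
Arguments s2 {A} _. Arguments b2 {A} _. Arguments m2 {A} _. Arguments e2 {A} _.
Arguments l01 {A} _. Arguments l02 {A} _. Arguments l12 {A} _.


(* 0-cell of Wdl^(2)(Kbar): lambda_{i,j} : s_j s_i -> s_i s_j weak distributive
   laws (t := s_j, s := s_i) plus the Yang-Baxter condition *)
Definition is_wdl2 {A : obj K} (D : wdl2_data A) : Prop :=
  wdl (s1 D) (b1 D) (m1 D) (e1 D) (s0 D) (b0 D) (m0 D) (e0 D) (l01 D) /\
  wdl (s2 D) (b2 D) (m2 D) (e2 D) (s0 D) (b0 D) (m0 D) (e0 D) (l02 D) /\
  wdl (s2 D) (b2 D) (m2 D) (e2 D) (s1 D) (b1 D) (m1 D) (e1 D) (l12 D) /\
  vcomp (hcomp (l01 D) (b2 D)) (vcomp (hcomp (b1 D) (l02 D)) (hcomp (l12 D) (b0 D)))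
  = vcomp (hcomp (b0 D) (l12 D)) (vcomp (hcomp (l02 D) (b1 D)) (hcomp (b2 D) (l01 D))).

Section Composites.
Context {A : obj K} (D : wdl2_data A).

Definition lbar01 : cell A A := wdl_idem (b1 D) (b0 D) (m0 D) (e0 D) (l01 D).
Definition lbar02 : cell A A := wdl_idem (b2 D) (b0 D) (m0 D) (e0 D) (l02 D).

Definition mult02 : cell A A :=
  vcomp (hcomp (m0 D) (m2 D)) (hcomp (b0 D) (hcomp (l02 D) (b2 D))).
Definition unit02 : cell A A := vcomp (l02 D) (hcomp (e2 D) (e0 D)).

Definition larrow012 : cell A A :=
  vcomp (hcomp (b0 D) (hcomp (b1 D) (m2 D)))
  (vcomp (hcomp (b0 D) (hcomp (l12 D) (b2 D)))
  (vcomp (hcomp (l02 D) (hcomp (b1 D) (b2 D)))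
         (hcomp (e2 D) (hcomp (b0 D) (hcomp (b1 D) (b2 D)))))).

Definition lbar012 : cell A A := vcomp larrow012 (hcomp lbar01 (b2 D)).

Definition mult012 : cell A A :=
  vcomp lbar012
  (vcomp (hcomp (m0 D) (hcomp (m1 D) (m2 D)))
  (vcomp (hcomp (b0 D) (hcomp (b0 D) (hcomp (b1 D) (hcomp (l12 D) (b2 D)))))
  (vcomp (hcomp (b0 D) (hcomp (l01 D) (hcomp (b2 D) (hcomp (b1 D) (b2 D)))))
         (hcomp (b0 D) (hcomp (b1 D) (hcomp (l02 D) (hcomp (b1 D) (b2 D)))))))).

Definition unit012 : cell A A :=
  vcomp lbar012
  (vcomp (hcomp (b0 D) (l12 D))
  (vcomp (hcomp (l02 D) (b1 D))
  (vcomp (hcomp (b2 D) (l01 D))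
         (hcomp (e2 D) (hcomp (e1 D) (e0 D)))))).

Definition phi1_02 : cell A A :=
  vcomp lbar012 (hcomp (b0 D) (hcomp (e1 D) (b2 D))).

End Composites.
End Kbar.

Arguments s0 {K A} _. Arguments b0 {K A} _. Arguments m0 {K A} _. Arguments e0 {K A} _.
Arguments s1 {K A} _. Arguments b1 {K A} _. Arguments m1 {K A} _. Arguments e1 {K A} _.
Arguments s2 {K A} _. Arguments b2 {K A} _. Arguments m2 {K A} _. Arguments e2 {K A} _.
Arguments l01 {K A} _. Arguments l02 {K A} _. Arguments l12 {K A} _.

(* Main.v *)
Require Import Defs.
From Stdlib Require Import List Arith Lia Bool.
Import ListNotations.

Inductive atom := Mu (i : nat) | Eta (i : nat) | Lam (i j : nat).

Definition asrc (a : atom) : list nat :=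
  match a with Mu i => [i; i] | Eta _ => [] | Lam i j => [j; i] end.
Definition atgt (a : atom) : list nat :=
  match a with Mu i => [i] | Eta i => [i] | Lam i j => [i; j] end.
Definition vatom (a : atom) : bool :=
  match a with Mu i => i <? 3 | Eta i => i <? 3 | Lam i j => (i <? j) && (j <? 3) end.
Definition wordok (w : list nat) : bool := forallb (fun i => i <? 3) w.

Definition layer := (nat * atom)%type.

Fixpoint leqb (u v : list nat) : bool :=
  match u, v with
  | [], [] => true
  | x :: u', y :: v' => Nat.eqb x y && leqb u' v'
  | _, _ => false
  end.
Lemma leqb_eq u v : leqb u v = true -> u = v.
Proof.
  revert v; induction u as [|x u IH]; destruct v as [|y v]; simpl; try discriminate; auto.
  intro H; apply andb_true_iff in H; destruct H as [H1 H2].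
  apply Nat.eqb_eq in H1; subst; f_equal; auto.
Qed.

Definition okl (w : list nat) (l : layer) : bool :=
  let (k, a) := l in
  vatom a && wordok w && (k + length (asrc a) <=? length w) &&
  leqb (firstn (length (asrc a)) (skipn k w)) (asrc a).
Definition step (w : list nat) (l : layer) : list nat :=
  let (k, a) := l in firstn k w ++ atgt a ++ skipn (k + length (asrc a)) w.

Fixpoint wt (w : list nat) (c : list layer) : bool :=
  match c with [] => wordok w | l :: c' => okl w l && wt (step w l) c' end.
Fixpoint out (w : list nat) (c : list layer) : list nat :=
  match c with [] => w | l :: c' => out (step w l) c' end.

Definition shift (n : nat) (l : layer) : layer := let (k, a) := l in (n + k, a).

Section Interp.
Variable K : TwoCat.
Variable A : obj K.
Variable hS : nat -> hom A A.
Variable bS : nat -> cell A A.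
Variable ac : atom -> cell A A.

Fixpoint H (w : list nat) : hom A A :=
  match w with
  | [] => id1 A
  | [x] => hS x
  | x :: w' => comp1 (hS x) (H w')
  end.
Fixpoint B (w : list nat) : cell A A :=
  match w with
  | [] => id2 (id1 A)
  | [x] => bS x
  | x :: w' => hcomp (bS x) (B w')
  end.

Lemma H_cons x w : H (x :: w) = comp1 (hS x) (H w).
Proof. destruct w; simpl; [rewrite comp1_id_r|]; reflexivity. Qed.
Lemma B_cons x w : B (x :: w) = hcomp (bS x) (B w).
Proof. destruct w; simpl; [rewrite hcomp_id_r|]; reflexivity. Qed.
Lemma H_app u v : H (u ++ v) = comp1 (H u) (H v).
Proof.
  induction u as [|x u IH].
  - simpl; rewrite comp1_id_l; reflexivity.
  - rewrite <- app_comm_cons, !H_cons, IH, comp1_assoc; reflexivity.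
Qed.
Lemma B_app u v : B (u ++ v) = hcomp (B u) (B v).
Proof.
  induction u as [|x u IH].
  - simpl; rewrite hcomp_id_l; reflexivity.
  - rewrite <- app_comm_cons, !B_cons, IH, hcomp_assoc; reflexivity.
Qed.

Definition ty (x : cell A A) (u v : list nat) := src x = H u /\ tgt x = H v.

Lemma ty_h x y u u' v v' : ty x u u' -> ty y v v' -> ty (hcomp x y) (u ++ v) (u' ++ v').
Proof.
  intros [H1 H2] [H3 H4]; split; rewrite ?src_hcomp, ?tgt_hcomp, H_app; congruence.
Qed.
Lemma ty_v x y u v w : ty x v w -> ty y u v -> ty (vcomp x y) u w.
Proof.
  intros [H1 H2] [H3 H4]; split.
  - rewrite src_vcomp; congruence.
  - rewrite tgt_vcomp; congruence.
Qed.
Lemma vassoc a b c t u v w : ty a v w -> ty b u v -> ty c t u ->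
  vcomp a (vcomp b c) = vcomp (vcomp a b) c.
Proof. intros [] [] []; apply vcomp_assoc; congruence. Qed.
Lemma ichg a a' b b' u v w u2 v2 w2 : ty a v w -> ty a' u v -> ty b v2 w2 -> ty b' u2 v2 ->
  hcomp (vcomp a a') (vcomp b b') = vcomp (hcomp a b) (hcomp a' b').
Proof. intros [] [] [] []; apply interchange; congruence. Qed.

Definition good (x : cell A A) (u v : list nat) :=
  ty x u v /\ vcomp (B v) x = x /\ vcomp x (B u) = x.

Hypothesis Hlet : forall i, i < 3 -> src (bS i) = hS i /\ tgt (bS i) = hS i /\ vcomp (bS i) (bS i) = bS i.

Lemma good_B w : wordok w = true -> good (B w) w w.
Proof.
  induction w as [|x w IH]; intro Hw.
  - simpl; split; [split; rewrite ?src_id2, ?tgt_id2; reflexivity|].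
    pose proof (vcomp_id_l _ _ _ (id2 (id1 A))) as E; rewrite tgt_id2 in E.
    split; exact E.
  - simpl in Hw; apply andb_true_iff in Hw; destruct Hw as [Hx Hw]. apply Nat.ltb_lt in Hx.
    destruct (Hlet x Hx) as (Hs & Ht & Hi).
    destruct (IH Hw) as ((Hs' & Ht') & Hi' & _).
    unfold good; rewrite !B_cons.
    assert (T : ty (hcomp (bS x) (B w)) (x :: w) (x :: w)).
    { change (x :: w) with ([x] ++ w). apply ty_h; [split; simpl; auto | split; auto]. }
    assert (E : vcomp (hcomp (bS x) (B w)) (hcomp (bS x) (B w)) = hcomp (bS x) (B w)).
    { erewrite <- (ichg _ _ _ _ [x] [x] [x] w w w); [|split; simpl; auto..|split; auto|split; auto].
      rewrite Hi, Hi'; reflexivity. }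
    split; [exact T|]. split; exact E.
Qed.

Lemma good_ty x u v : good x u v -> ty x u v. Proof. intros []; auto. Qed.

Lemma good_h x y u u' v v' : wordok u' = true -> wordok v' = true -> wordok u = true -> wordok v = true ->
  good x u u' -> good y v v' -> good (hcomp x y) (u ++ v) (u' ++ v').
Proof.
  intros Ou' Ov' Ou Ov (Tx & Lx & Rx) (Ty & Ly & Ry).
  destruct (good_B _ Ou') as (Tu' & _). destruct (good_B _ Ov') as (Tv' & _).
  destruct (good_B _ Ou) as (Tu & _). destruct (good_B _ Ov) as (Tv & _).
  split; [apply ty_h; auto|]. split.
  - rewrite B_app. erewrite <- (ichg _ _ _ _ u u' u' v v' v'); auto. rewrite Lx, Ly; auto.
  - rewrite B_app. erewrite <- (ichg _ _ _ _ u u u' v v v'); auto. rewrite Rx, Ry; auto.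
Qed.

Lemma good_v x y u v w : wordok u = true -> wordok w = true ->
  good x v w -> good y u v -> good (vcomp x y) u w.
Proof.
  intros Ou Ow (Tx & Lx & Rx) (Ty & Ly & Ry).
  destruct (good_B _ Ou) as (Tu & _). destruct (good_B _ Ow) as (Tw & _).
  split; [eapply ty_v; eauto|]. split.
  - rewrite (vassoc _ _ _ u v w w); auto. rewrite Lx; auto.
  - rewrite <- (vassoc _ _ _ u u v w); auto. rewrite Ry; auto.
Qed.


Lemma ty_conv x u v u' v' : ty x u' v' -> u' = u -> v' = v -> ty x u v.
Proof. intros; subst; auto. Qed.
Lemma ty_v' x y u v v' w : ty x v w -> ty y u v' -> v' = v -> ty (vcomp x y) u w.
Proof. intros; subst; eapply ty_v; eauto. Qed.
Lemma wordok_app u v : wordok (u ++ v) = wordok u && wordok v.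
Proof. unfold wordok; apply forallb_app. Qed.

Ltac lnorm := first [ reflexivity | (repeat rewrite <- app_assoc; simpl; reflexivity) ].
Ltac wok := repeat rewrite wordok_app; repeat (apply andb_true_intro; split); auto.
Ltac tyauto :=
  lazymatch goal with
  | |- ty (hcomp _ _) _ _ => eapply ty_conv; [eapply ty_h; tyauto | lnorm | lnorm]
  | |- ty (vcomp _ _) _ _ => eapply ty_v'; [tyauto | tyauto | lnorm]
  | |- ty (B _) _ _ => eapply ty_conv; [eapply good_ty; apply good_B; wok | lnorm | lnorm]
  | |- ty _ _ _ => eapply ty_conv; [eapply good_ty; eassumption | lnorm | lnorm]
  end.

Lemma Bidem w : wordok w = true -> vcomp (B w) (B w) = B w.
Proof. intro Hw; destruct (good_B w Hw) as (_ & E & _); exact E. Qed.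

Lemma two_atoms_A x y s1 t1 s2 t2 p1 p2 q :
  good x s1 t1 -> good y s2 t2 ->
  wordok p1 = true -> wordok p2 = true -> wordok q = true -> wordok s1 = true ->
  wordok t1 = true -> wordok s2 = true -> wordok t2 = true ->
  vcomp (hcomp (B p1) (hcomp y (B (p2 ++ t1 ++ q)))) (hcomp (B (p1 ++ s2 ++ p2)) (hcomp x (B q)))
  = vcomp (hcomp (B (p1 ++ t2 ++ p2)) (hcomp x (B q))) (hcomp (B p1) (hcomp y (B (p2 ++ s1 ++ q)))).
Proof.
  intros Gx Gy O1 O2 O3 O4 O5 O6 O7.
  pose proof Gx as (Tx & Lx & Rx). pose proof Gy as (Ty & Ly & Ry).
  transitivity (hcomp (B p1) (hcomp y (hcomp (B p2) (hcomp x (B q))))).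
  - rewrite !B_app. rewrite !hcomp_assoc.
    erewrite <- (ichg (B p1) (B p1)); [|tyauto..]. rewrite Bidem by auto.
    erewrite <- (ichg y (B s2)); [|tyauto..]. rewrite Ry.
    erewrite <- (ichg (B p2) (B p2)); [|tyauto..]. rewrite Bidem by auto.
    erewrite <- (ichg (B t1) x); [|tyauto..]. rewrite Lx, Bidem by auto. reflexivity.
  - rewrite !B_app. rewrite !hcomp_assoc.
    erewrite <- (ichg (B p1) (B p1)); [|tyauto..]. rewrite Bidem by auto.
    erewrite <- (ichg (B t2) y); [|tyauto..]. rewrite Ly.
    erewrite <- (ichg (B p2) (B p2)); [|tyauto..]. rewrite Bidem by auto.
    erewrite <- (ichg x (B s1)); [|tyauto..]. rewrite Rx, Bidem by auto. reflexivity.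
Qed.


Hypothesis Hatom : forall a, vatom a = true -> good (ac a) (asrc a) (atgt a).

Lemma vatom_words a : vatom a = true -> wordok (asrc a) = true /\ wordok (atgt a) = true.
Proof.
  destruct a; simpl; intro Hv; [| |apply andb_true_iff in Hv; destruct Hv as [H1 H2]];
  rewrite ?Hv; simpl; auto.
  rewrite H2. assert (E : i <? 3 = true) by (apply Nat.ltb_lt; apply Nat.ltb_lt in H1; apply Nat.ltb_lt in H2; lia).
  rewrite E; auto.
Qed.

Definition lay (w : list nat) (l : layer) : cell A A :=
  let (k, a) := l in hcomp (B (firstn k w)) (hcomp (ac a) (B (skipn (k + length (asrc a)) w))).

Fixpoint interp (w : list nat) (c : list layer) : cell A A :=
  match c with [] => B w | l :: c' => vcomp (interp (step w l) c') (lay w l) end.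

Lemma firstn_app3 (f s r : list nat) : firstn (length f) (f ++ s ++ r) = f.
Proof. rewrite firstn_app, Nat.sub_diag, firstn_all; simpl; apply app_nil_r. Qed.
Lemma skipn_app3 (f s r : list nat) : skipn (length f + length s) (f ++ s ++ r) = r.
Proof. rewrite app_assoc, <- length_app, skipn_app, skipn_all, Nat.sub_diag; reflexivity. Qed.

Lemma okl_dec w k a : okl w (k, a) = true ->
  exists f r, w = f ++ asrc a ++ r /\ length f = k /\ wordok f = true /\ wordok r = true /\ vatom a = true.
Proof.
  unfold okl; intro Hk. repeat rewrite andb_true_iff in Hk. destruct Hk as [[[Hv Hw] Hl] He].
  apply leqb_eq in He. apply Nat.leb_le in Hl.
  exists (firstn k w), (skipn (k + length (asrc a)) w).
  assert (Ew : w = firstn k w ++ asrc a ++ skipn (k + length (asrc a)) w).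
  { rewrite <- (firstn_skipn k w) at 1. f_equal.
    rewrite <- (firstn_skipn (length (asrc a)) (skipn k w)) at 1. rewrite He. f_equal.
    rewrite skipn_skipn. f_equal. lia. }
  split; [exact Ew|]. split; [rewrite length_firstn; lia|].
  rewrite Ew in Hw. rewrite !wordok_app in Hw. repeat rewrite andb_true_iff in Hw.
  destruct Hw as [H1 [H2 H3]]. auto.
Qed.

Lemma lay_eq f r a : lay (f ++ asrc a ++ r) (length f, a) = hcomp (B f) (hcomp (ac a) (B r)).
Proof. unfold lay. rewrite firstn_app3, skipn_app3. reflexivity. Qed.
Lemma step_eq f r a : step (f ++ asrc a ++ r) (length f, a) = f ++ atgt a ++ r.
Proof. unfold step. rewrite firstn_app3, skipn_app3. reflexivity. Qed.
Lemma okl_intro f r a : vatom a = true -> wordok f = true -> wordok r = true ->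
  okl (f ++ asrc a ++ r) (length f, a) = true.
Proof.
  intros Hv Hf Hr. destruct (vatom_words a Hv) as [Hs Ht]. unfold okl.
  rewrite Hv, !wordok_app, Hf, Hr, Hs. simpl.
  rewrite skipn_app, Nat.sub_diag, skipn_all. simpl.
  rewrite firstn_app, Nat.sub_diag, firstn_all. simpl. rewrite app_nil_r.
  apply andb_true_intro; split.
  - apply Nat.leb_le. rewrite !length_app; lia.
  - clear. induction (asrc a); simpl; auto. rewrite Nat.eqb_refl; auto.
Qed.

Lemma good_lay w l : okl w l = true -> good (lay w l) w (step w l) /\ wordok (step w l) = true.
Proof.
  destruct l as [k a]. intro Hk. destruct (okl_dec _ _ _ Hk) as (f & r & -> & <- & Hf & Hr & Hv).
  rewrite lay_eq, step_eq. destruct (vatom_words a Hv) as [Hs Ht].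
  split; [|wok].
  apply good_h; try wok. { apply good_B; auto. }
  apply good_h; auto. apply good_B; auto.
Qed.

Lemma wt_wordok w c : wt w c = true -> wordok w = true.
Proof.
  destruct c as [|l c]; simpl; auto. intro H. apply andb_true_iff in H; destruct H as [H _].
  destruct l; unfold okl in H. repeat rewrite andb_true_iff in H. tauto.
Qed.

Lemma interp_good w c : wt w c = true -> good (interp w c) w (out w c) /\ wordok (out w c) = true.
Proof.
  revert w; induction c as [|l c IH]; intros w Hw; simpl in *.
  - split; [apply good_B|]; auto.
  - apply andb_true_iff in Hw; destruct Hw as [H1 H2].
    destruct (good_lay _ _ H1) as [G1 O1]. destruct (IH _ H2) as [G2 O2].
    split; auto. eapply good_v; eauto.
    apply (wt_wordok w (l :: c)); simpl; rewrite H1, H2; reflexivity.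
Qed.

Lemma wt_app w c1 c2 : wt w (c1 ++ c2) = true -> wt w c1 = true /\ wt (out w c1) c2 = true.
Proof.
  revert w; induction c1 as [|l c1 IH]; intros w Hw; simpl in *.
  - split; auto. eapply wt_wordok; eauto.
  - apply andb_true_iff in Hw; destruct Hw as [H1 H2]. destruct (IH _ H2). rewrite H1; auto.
Qed.
Lemma wt_app_intro w c1 c2 : wt w c1 = true -> wt (out w c1) c2 = true -> wt w (c1 ++ c2) = true.
Proof.
  revert w; induction c1 as [|l c1 IH]; intros w H1 H2; simpl in *; auto.
  apply andb_true_iff in H1; destruct H1 as [H1 H3]. rewrite H1; simpl; auto.
Qed.
Lemma out_app w c1 c2 : out w (c1 ++ c2) = out (out w c1) c2.
Proof. revert w; induction c1; simpl; auto. Qed.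

Lemma interp_app w c1 c2 : wt w (c1 ++ c2) = true ->
  interp w (c1 ++ c2) = vcomp (interp (out w c1) c2) (interp w c1).
Proof.
  revert w; induction c1 as [|l c1 IH]; intros w Hw; simpl in *.
  - destruct (interp_good w c2 Hw) as [(T & L & R) _]. auto.
  - apply andb_true_iff in Hw; destruct Hw as [H1 H2].
    rewrite IH by auto. destruct (wt_app _ _ _ H2) as [H3 H4].
    destruct (good_lay _ _ H1) as [G1 _].
    destruct (interp_good _ _ H3) as [G3 _]. destruct (interp_good _ _ H4) as [G4 _].
    symmetry; eapply vassoc; eapply good_ty; eauto.
Qed.


Lemma whisk_cell p q x u v : wordok p = true -> wordok q = true -> wordok u = true -> wordok v = true ->
  good x u v -> forall y u0, good y u0 u -> wordok u0 = true ->
  hcomp (B p) (hcomp (vcomp x y) (B q)) = vcomp (hcomp (B p) (hcomp x (B q))) (hcomp (B p) (hcomp y (B q))).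
Proof.
  intros Op Oq Ou Ov Gx y u0 Gy Ou0.
  rewrite <- (Bidem q) at 1 by auto.
  erewrite ichg; [|tyauto..].
  rewrite <- (Bidem p) at 1 by auto.
  erewrite ichg; [|tyauto..]. reflexivity.
Qed.

Lemma wt_cons w l c : wt w (l :: c) = okl w l && wt (step w l) c. Proof. reflexivity. Qed.
Lemma out_cons w l c : out w (l :: c) = out (step w l) c. Proof. reflexivity. Qed.
Lemma interp_cons w l c : interp w (l :: c) = vcomp (interp (step w l) c) (lay w l). Proof. reflexivity. Qed.
Lemma shift_eq n k a : shift n (k, a) = (n + k, a). Proof. reflexivity. Qed.

Lemma interp_whisk p q u c : wt u c = true -> wordok p = true -> wordok q = true ->
  wt (p ++ u ++ q) (map (shift (length p)) c) = true /\
  out (p ++ u ++ q) (map (shift (length p)) c) = p ++ out u c ++ q /\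
  hcomp (B p) (hcomp (interp u c) (B q)) = interp (p ++ u ++ q) (map (shift (length p)) c).
Proof.
  intros Hc Op Oq. revert u Hc; induction c as [|[k a] c IH]; intros u Hc.
  - simpl in *. split; [wok|]. split; [reflexivity|]. rewrite !B_app; reflexivity.
  - rewrite map_cons, shift_eq, wt_cons, out_cons, out_cons, interp_cons, interp_cons.
    rewrite wt_cons in Hc. apply andb_true_iff in Hc; destruct Hc as [H1 H2].
    destruct (okl_dec _ _ _ H1) as (f & r & Eu & Ef & Of & Or & Hv). subst u k.
    destruct (vatom_words a Hv) as [Os Ot].
    rewrite step_eq in *. destruct (IH _ H2) as (W & O & E).
    assert (Ew : p ++ (f ++ asrc a ++ r) ++ q = (p ++ f) ++ asrc a ++ (r ++ q)) by (rewrite <- !app_assoc; reflexivity).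
    assert (El : length p + length f = length (p ++ f)) by (rewrite length_app; reflexivity).
    rewrite Ew, El, step_eq, okl_intro by wok.
    assert (Ew' : (p ++ f) ++ atgt a ++ r ++ q = p ++ (f ++ atgt a ++ r) ++ q) by (rewrite <- !app_assoc; reflexivity).
    rewrite Ew'. split; [exact W|]. split; [exact O|].
    rewrite lay_eq, <- E.
    destruct (interp_good _ _ H2) as [G2 O2].
    destruct (good_lay (f ++ asrc a ++ r) (length f, a) (okl_intro f r a Hv Of Or)) as [GL _].
    rewrite lay_eq, step_eq in GL.
    erewrite whisk_cell; [| | | | |exact G2|exact GL|]; try wok.
    f_equal. rewrite lay_eq, !B_app, !hcomp_assoc. reflexivity.
Qed.

Lemma interp_B w c : wt w c = true -> vcomp (interp w c) (B w) = interp w c.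
Proof. intro H; destruct (interp_good w c H) as [(_ & _ & R) _]; exact R. Qed.
Lemma B_interp w c : wt w c = true -> vcomp (B (out w c)) (interp w c) = interp w c.
Proof. intro H; destruct (interp_good w c H) as [(_ & L & _) _]; exact L. Qed.


Definition swap (l1 l2 : layer) : option (layer * layer) :=
  let (k1, a1) := l1 in let (k2, a2) := l2 in
  if k2 + length (asrc a2) <=? k1 then Some ((k2, a2), (k1 - length (asrc a2) + length (atgt a2), a1))
  else if k1 + length (atgt a1) <=? k2 then Some ((k2 - length (atgt a1) + length (asrc a1), a2), (k1, a1))
  else None.

Lemma split_le (x1 x2 y1 y2 : list nat) : x1 ++ x2 = y1 ++ y2 -> length x1 <= length y1 ->
  exists m, y1 = x1 ++ m /\ x2 = m ++ y2.
Proof.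
  intros E Hl. destruct (app_eq_app _ _ _ _ E) as (m & [[E1 E2]|[E1 E2]]).
  - subst. rewrite length_app in Hl. destruct m; [|simpl in Hl; lia].
    exists []. simpl. rewrite !app_nil_r. auto.
  - eauto.
Qed.

Lemma lay_eq' w f r a k : w = f ++ asrc a ++ r -> k = length f -> lay w (k, a) = hcomp (B f) (hcomp (ac a) (B r)).
Proof. intros; subst; apply lay_eq. Qed.
Lemma step_eq' w f r a k : w = f ++ asrc a ++ r -> k = length f -> step w (k, a) = f ++ atgt a ++ r.
Proof. intros; subst; apply step_eq. Qed.
Lemma okl_intro' w f r a k : w = f ++ asrc a ++ r -> k = length f -> vatom a = true -> wordok f = true -> wordok r = true ->
  okl w (k, a) = true.
Proof. intros; subst; apply okl_intro; auto. Qed.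

Lemma swap_ok w l1 l2 l2' l1' : wt w [l1; l2] = true -> swap l1 l2 = Some (l2', l1') ->
  wt w [l2'; l1'] = true /\ out w [l2'; l1'] = out w [l1; l2] /\ interp w [l1; l2] = interp w [l2'; l1'].
Proof.
  destruct l1 as [k1 a1], l2 as [k2 a2]. intros Hw Hs.
  rewrite !wt_cons in Hw. repeat rewrite andb_true_iff in Hw. destruct Hw as [Ok1 [Ok2 Ow]].
  destruct (okl_dec _ _ _ Ok1) as (f & r & Ew & Ef & Of & Or & V1). subst k1.
  destruct (vatom_words a1 V1) as [Os1 Ot1].
  rewrite (step_eq' _ f r a1 _ Ew eq_refl) in Ok2, Ow.
  destruct (okl_dec _ _ _ Ok2) as (f2 & r2 & Ew2 & Ef2 & Of2 & Or2 & V2). subst k2.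
  destruct (vatom_words a2 V2) as [Os2 Ot2].
  rewrite (step_eq' _ f2 r2 a2 _ Ew2 eq_refl) in Ow.
  pose proof (good_lay _ _ Ok1) as [G1 _]. pose proof (good_lay _ _ Ok2) as [G2 _].
  rewrite (lay_eq' _ f r a1 _ Ew eq_refl), (step_eq' _ f r a1 _ Ew eq_refl) in G1.
  rewrite (lay_eq' _ f2 r2 a2 _ Ew2 eq_refl), (step_eq' _ f2 r2 a2 _ Ew2 eq_refl) in G2.
  pose proof (Hatom a1 V1) as Ga1. pose proof (Hatom a2 V2) as Ga2.
  unfold swap in Hs.
  destruct (Nat.leb_spec (length f2 + length (asrc a2)) (length f)) as [L|L].
  - injection Hs as <- <-.
    destruct (split_le (f2 ++ asrc a2) r2 f (atgt a1 ++ r)) as (p2 & Ef' & Er2).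
    { rewrite <- app_assoc, <- Ew2; reflexivity. }
    { rewrite length_app; lia. }
    rewrite <- app_assoc in Ef'. subst f r2.
    assert (Ew' : w = f2 ++ asrc a2 ++ (p2 ++ asrc a1 ++ r)) by (rewrite Ew; rewrite <- !app_assoc; reflexivity).
    assert (Ex : length (f2 ++ asrc a2 ++ p2) - length (asrc a2) + length (atgt a2) = length (f2 ++ atgt a2 ++ p2))
      by (rewrite !length_app; lia).
    rewrite !wordok_app in Of. repeat rewrite andb_true_iff in Of. destruct Of as [Of2' [_ Op2]].
    assert (Ew1' : f2 ++ atgt a2 ++ p2 ++ asrc a1 ++ r = (f2 ++ atgt a2 ++ p2) ++ asrc a1 ++ r)
      by (rewrite <- !app_assoc; reflexivity).
    assert (Ok2' : okl w (length f2, a2) = true) by (apply (okl_intro' _ f2 (p2 ++ asrc a1 ++ r)); auto; wok).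
    assert (Ok1' : okl (f2 ++ atgt a2 ++ p2 ++ asrc a1 ++ r) (length (f2 ++ atgt a2 ++ p2), a1) = true)
      by (apply (okl_intro' _ (f2 ++ atgt a2 ++ p2) r); auto; wok).
    rewrite Ex.
    rewrite !wt_cons, !out_cons, !interp_cons.
    rewrite (step_eq' _ f2 (p2 ++ asrc a1 ++ r) a2 _ Ew' eq_refl).
    rewrite (step_eq' _ _ _ a1 _ Ew1' eq_refl), (lay_eq' _ _ _ a1 _ Ew1' eq_refl).
    rewrite (lay_eq' _ f2 (p2 ++ asrc a1 ++ r) a2 _ Ew' eq_refl).
    rewrite (step_eq' _ _ r a1 _ Ew eq_refl). rewrite (lay_eq' _ _ r a1 _ Ew eq_refl).
    rewrite (step_eq' _ f2 (p2 ++ atgt a1 ++ r) a2 _ Ew2 eq_refl).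
    rewrite (lay_eq' _ f2 (p2 ++ atgt a1 ++ r) a2 _ Ew2 eq_refl).
    rewrite Ok2', Ok1'. simpl andb. simpl out. cbn [interp].
    pose proof (good_lay _ _ Ok1') as [G1' _].
    rewrite (lay_eq' _ _ _ a1 _ Ew1' eq_refl), (step_eq' _ _ _ a1 _ Ew1' eq_refl) in G1'.
    split; [wok|]. split; [rewrite <- !app_assoc; reflexivity|].
    destruct G2 as (_ & L2 & _). destruct G1' as (_ & L1' & _). rewrite L2, L1'.
    apply two_atoms_A; auto.
  - destruct (Nat.leb_spec (length f + length (atgt a1)) (length f2)) as [L'|L']; [|discriminate].
    injection Hs as <- <-.
    destruct (split_le (f ++ atgt a1) r f2 (asrc a2 ++ r2)) as (q1 & Ef2' & Er).
    { rewrite <- app_assoc, Ew2; reflexivity. }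
    { rewrite length_app; lia. }
    rewrite <- app_assoc in Ef2'. subst f2 r.
    rewrite !wordok_app in Of2. repeat rewrite andb_true_iff in Of2. destruct Of2 as [_ [_ Oq1]].
    assert (Ew' : w = (f ++ asrc a1 ++ q1) ++ asrc a2 ++ r2) by (rewrite Ew; rewrite <- !app_assoc; reflexivity).
    assert (Ex : length (f ++ atgt a1 ++ q1) - length (atgt a1) + length (asrc a1) = length (f ++ asrc a1 ++ q1))
      by (rewrite !length_app; lia).
    assert (Ew1' : (f ++ asrc a1 ++ q1) ++ atgt a2 ++ r2 = f ++ asrc a1 ++ (q1 ++ atgt a2 ++ r2))
      by (rewrite <- !app_assoc; reflexivity).
    assert (Ok2' : okl w (length (f ++ asrc a1 ++ q1), a2) = true) by (apply (okl_intro' _ _ r2 _ _ Ew'); auto; wok).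
    assert (Ok1' : okl ((f ++ asrc a1 ++ q1) ++ atgt a2 ++ r2) (length f, a1) = true)
      by (apply (okl_intro' _ f (q1 ++ atgt a2 ++ r2) _ _ Ew1'); auto; wok).
    rewrite Ex.
    rewrite !wt_cons, !out_cons, !interp_cons.
    rewrite (step_eq' _ _ _ a2 _ Ew' eq_refl), (lay_eq' _ _ _ a2 _ Ew' eq_refl).
    rewrite (step_eq' _ _ _ a1 _ Ew1' eq_refl), (lay_eq' _ _ _ a1 _ Ew1' eq_refl).
    rewrite (step_eq' _ f _ a1 _ Ew eq_refl), (lay_eq' _ f _ a1 _ Ew eq_refl).
    rewrite (step_eq' _ _ r2 a2 _ Ew2 eq_refl), (lay_eq' _ _ r2 a2 _ Ew2 eq_refl).
    rewrite Ok2', Ok1'. simpl andb. simpl out. cbn [interp].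
    pose proof (good_lay _ _ Ok1') as [G1' _].
    rewrite (lay_eq' _ _ _ a1 _ Ew1' eq_refl), (step_eq' _ _ _ a1 _ Ew1' eq_refl) in G1'.
    split; [wok|]. split; [rewrite <- !app_assoc; reflexivity|].
    destruct G2 as (_ & L2 & _). destruct G1' as (_ & L1' & _). rewrite L2, L1'.
    symmetry. apply (two_atoms_A (ac a2) (ac a1)); auto.
Qed.


Fixpoint pull (i : nat) (c : list layer) {struct c} : option (list layer) :=
  match c with
  | [] => None
  | l :: c' =>
      match i with
      | 0 => Some c
      | S i' =>
          match pull i' c' with
          | Some (l2 :: c2) =>
              match swap l l2 with
              | Some (l2', l1') => Some (l2' :: l1' :: c2)
              | None => None
              end
          | _ => None
          end
      end
  end.

Lemma pull_ok c : forall i w c', wt w c = true -> pull i c = Some c' ->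
  wt w c' = true /\ out w c' = out w c /\ interp w c' = interp w c.
Proof.
  induction c as [|l c0 IH]; intros i w c' Hw Hp; [simpl in Hp; discriminate|].
  destruct i as [|i']; [simpl in Hp; injection Hp as <-; auto|].
  simpl in Hp. destruct (pull i' c0) as [[|l2 c2]|] eqn:Ep; try discriminate.
  destruct (swap l l2) as [[l2' l1']|] eqn:Es; [|discriminate]. injection Hp as <-.
  rewrite wt_cons in Hw. apply andb_true_iff in Hw; destruct Hw as [Hl Hw0].
  destruct (IH _ _ _ Hw0 Ep) as (W1 & O1 & I1).
  rewrite wt_cons in W1. apply andb_true_iff in W1; destruct W1 as [Hl2 W2].
  assert (Hpair : wt w [l; l2] = true).
  { rewrite !wt_cons, Hl, Hl2. simpl. eapply wt_wordok; eauto. }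
  destruct (swap_ok _ _ _ _ _ Hpair Es) as (Ws & Os & Is).
  change (l2' :: l1' :: c2) with ([l2'; l1'] ++ c2).
  assert (Wn : wt w ([l2'; l1'] ++ c2) = true) by (apply wt_app_intro; auto; rewrite Os; exact W2).
  split; [exact Wn|]. split.
  - rewrite out_app, Os. simpl. rewrite <- O1. reflexivity.
  - rewrite interp_app by auto. rewrite Os, <- Is.
    assert (Wl : wt w ([l; l2] ++ c2) = true) by (apply wt_app_intro; auto).
    rewrite <- (interp_app w [l; l2] c2 Wl). change ([l; l2] ++ c2) with (l :: l2 :: c2).
    rewrite (interp_cons w l (l2 :: c2)), (interp_cons w l c0), I1. reflexivity.
Qed.

Definition akey (a : atom) : nat :=
  match a with Mu i => i | Eta i => 10 + i | Lam i j => 20 + 10 * i + j end.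
Definition key_lt (l1 l2 : layer) : bool :=
  let (k1, a1) := l1 in let (k2, a2) := l2 in
  (k1 <? k2) || ((k1 =? k2) && (akey a1 <? akey a2)).
Definition better (x y : list layer) : bool :=
  match x, y with l1 :: _, l2 :: _ => key_lt l1 l2 | _, _ => false end.

Fixpoint cands (i n : nat) (c : list layer) : list (list layer) :=
  match n with
  | 0 => []
  | S n' => match pull i c with Some c' => c' :: cands (S i) n' c | None => cands (S i) n' c end
  end.
Fixpoint pick (cs : list (list layer)) : option (list layer) :=
  match cs with
  | [] => None
  | x :: cs' => match pick cs' with None => Some x | Some y => if better x y then Some x else Some y end
  end.

Lemma cands_in i n c y : In y (cands i n c) -> exists j, pull j c = Some y.
Proof.
  revert i; induction n as [|n IH]; intros i Hi; simpl in Hi; [contradiction|].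
  destruct (pull i c) eqn:E; [destruct Hi as [<-|Hi]; eauto|]; eauto.
Qed.
Lemma pick_in cs y : pick cs = Some y -> In y cs.
Proof.
  induction cs as [|x cs IH]; simpl; [discriminate|].
  destruct (pick cs) as [z|]; [destruct (better x z)|]; intro E; injection E as <-; auto.
Qed.

Definition key_eqb (l1 l2 : layer) : bool :=
  let (k1, a1) := l1 in let (k2, a2) := l2 in (k1 =? k2) && (akey a1 =? akey a2).
Fixpoint clt (x y : list layer) : bool :=
  match x, y with
  | [], [] => false
  | [], _ => true
  | _, [] => false
  | l1 :: x', l2 :: y' => key_lt l1 l2 || (key_eqb l1 l2 && clt x' y')
  end.
Fixpoint minhead (cs : list (list layer)) : option layer :=
  match cs with
  | [] => None
  | [] :: cs' => minhead cs'
  | (l :: _) :: cs' => match minhead cs' with None => Some l | Some m => if key_lt l m then Some l else Some m end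
  end.
Definition headeq (m : layer) (x : list layer) : bool :=
  match x with l :: _ => key_eqb l m | [] => false end.
Fixpoint pickmin (rs : list (list layer)) : option (list layer) :=
  match rs with
  | [] => None
  | x :: r => match pickmin r with None => Some x | Some y => if clt x y then Some x else Some y end
  end.

Fixpoint normf (n : nat) (w : list nat) (c : list layer) : list layer :=
  match n with
  | 0 => c
  | S n' =>
      let cs := cands 0 (length c) c in
      match minhead cs with
      | None => c
      | Some m =>
          let rs := map (fun x => match x with l :: r => l :: normf n' (step w l) r | [] => c end)
                        (filter (headeq m) cs) in
          match pickmin rs with Some r => r | None => c end
      end
  end.
Definition norm (w : list nat) (c : list layer) := normf (length c) w c.

Lemma pickmin_in rs y : pickmin rs = Some y -> In y rs.
Proof.
  induction rs as [|x rs IH]; simpl; [discriminate|].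
  destruct (pickmin rs) as [z|]; [destruct (clt x z)|]; intro E; injection E as <-; auto.
Qed.

Lemma normf_ok n : forall w c, wt w c = true -> wt w (normf n w c) = true /\ interp w (normf n w c) = interp w c.
Proof.
  induction n as [|n IH]; intros w c Hw; simpl; auto.
  destruct (minhead (cands 0 (length c) c)) as [m|]; auto.
  match goal with |- context [pickmin ?rs] => destruct (pickmin rs) as [r|] eqn:E end; auto.
  apply pickmin_in in E. apply in_map_iff in E. destruct E as [x [Ex Hx]].
  apply filter_In in Hx. destruct Hx as [Hx _].
  apply cands_in in Hx. destruct Hx as [j Ej].
  destruct x as [|l c']; [subst r; auto|]. subst r.
  destruct (pull_ok _ _ _ _ Hw Ej) as (W & _ & I).
  rewrite wt_cons in W. apply andb_true_iff in W; destruct W as [Wl W'].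
  destruct (IH _ _ W') as [W2 I2].
  rewrite wt_cons, Wl, W2. split; auto.
  rewrite interp_cons, I2, <- interp_cons. exact I.
Qed.

Definition atom_eqb (a b : atom) : bool :=
  match a, b with
  | Mu i, Mu j => Nat.eqb i j
  | Eta i, Eta j => Nat.eqb i j
  | Lam i j, Lam i' j' => Nat.eqb i i' && Nat.eqb j j'
  | _, _ => false
  end.
Fixpoint ceqb (x y : list layer) : bool :=
  match x, y with
  | [], [] => true
  | (k, a) :: x', (k', a') :: y' => Nat.eqb k k' && atom_eqb a a' && ceqb x' y'
  | _, _ => false
  end.
Lemma ceqb_eq x y : ceqb x y = true -> x = y.
Proof.
  revert y; induction x as [|[k a] x IH]; destruct y as [|[k' a'] y]; simpl; try discriminate; auto.
  intro E. repeat rewrite andb_true_iff in E. destruct E as [[E1 E2] E3].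
  apply Nat.eqb_eq in E1. subst. rewrite (IH _ E3). f_equal. f_equal.
  destruct a, a'; simpl in E2; try discriminate;
    repeat rewrite andb_true_iff in E2; repeat match goal with H : _ /\ _ |- _ => destruct H end;
    repeat match goal with H : Nat.eqb _ _ = true |- _ => apply Nat.eqb_eq in H end; subst; auto.
Qed.

Definition check_eq (w : list nat) (X Y : list layer) : bool :=
  wt w X && wt w Y && ceqb (norm w X) (norm w Y).
Lemma conv_ok w X Y : check_eq w X Y = true -> interp w X = interp w Y.
Proof.
  unfold check_eq; intro E. repeat rewrite andb_true_iff in E. destruct E as [[WX WY] E].
  apply ceqb_eq in E. unfold norm in E.
  destruct (normf_ok (length X) w X WX) as [_ IX]. destruct (normf_ok (length Y) w Y WY) as [_ IY].
  rewrite <- IX, <- IY, E. reflexivity.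
Qed.

Lemma replace_ok w pre post c c' p u q :
  wt w (pre ++ map (shift (length p)) c ++ post) = true ->
  wt w (pre ++ map (shift (length p)) c' ++ post) = true ->
  out w pre = p ++ u ++ q -> wt u c = true -> wt u c' = true -> out u c = out u c' ->
  interp u c = interp u c' ->
  interp w (pre ++ map (shift (length p)) c ++ post) = interp w (pre ++ map (shift (length p)) c' ++ post).
Proof.
  intros W1 W2 Eo Wc Wc' Oc Ic.
  rewrite (interp_app w pre) by auto. rewrite (interp_app w pre) by auto.
  destruct (wt_app _ _ _ W1) as [_ W1']. destruct (wt_app _ _ _ W2) as [_ W2'].
  rewrite Eo in *.
  destruct (wt_app _ _ _ W1') as [M1 _].
  pose proof (wt_wordok _ _ M1) as Ow. rewrite !wordok_app in Ow. repeat rewrite andb_true_iff in Ow.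
  destruct Ow as [Op [_ Oq]].
  rewrite interp_app by auto. rewrite interp_app by auto.
  destruct (interp_whisk p q u c Wc Op Oq) as (_ & O1 & I1).
  destruct (interp_whisk p q u c' Wc' Op Oq) as (_ & O2 & I2).
  rewrite O1, O2, <- I1, <- I2, Ic, Oc. reflexivity.
Qed.

Definition check_step (w : list nat) (X Y : list layer) (u : list nat) (c c' pre post : list layer) (k : nat) : bool :=
  let ow := out w pre in
  let p := firstn k ow in
  let q := skipn (k + length u) ow in
  leqb (p ++ u ++ q) ow && Nat.eqb (length p) k &&
  wt u c && wt u c' && leqb (out u c) (out u c') &&
  wt w (pre ++ map (shift k) c ++ post) && wt w (pre ++ map (shift k) c' ++ post) &&
  wt w X && wt w Y &&
  ceqb (norm w X) (norm w (pre ++ map (shift k) c ++ post)) &&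
  ceqb (norm w Y) (norm w (pre ++ map (shift k) c' ++ post)).

Lemma step_ok w X Y u c c' pre post k : check_step w X Y u c c' pre post k = true ->
  interp u c = interp u c' -> interp w X = interp w Y.
Proof.
  unfold check_step; intros E Ic. repeat rewrite andb_true_iff in E.
  destruct E as [[[[[[[[[[E1 E2] Wc] Wc'] Oc] W1] W2] WX] WY] N1] N2].
  apply leqb_eq in E1. apply Nat.eqb_eq in E2. apply leqb_eq in Oc.
  apply ceqb_eq in N1. apply ceqb_eq in N2.
  transitivity (interp w (pre ++ map (shift k) c ++ post)).
  { unfold norm in N1. destruct (normf_ok (length X) w X WX) as [_ IX].
    destruct (normf_ok (length (pre ++ map (shift k) c ++ post)) w _ W1) as [_ IM]. rewrite <- IX, N1, IM. reflexivity. }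
  transitivity (interp w (pre ++ map (shift k) c' ++ post)).
  { pose proof (replace_ok w pre post c c' (firstn k (out w pre)) u (skipn (k + length u) (out w pre))) as R.
    rewrite E2 in R. apply R; auto. }
  { unfold norm in N2. destruct (normf_ok (length Y) w Y WY) as [_ IY].
    destruct (normf_ok (length (pre ++ map (shift k) c' ++ post)) w _ W2) as [_ IM]. rewrite <- IY, N2, IM. reflexivity. }
Qed.


Lemma map_shift0 c : map (shift 0) c = c.
Proof. induction c as [|[k a] c IH]; simpl; auto. rewrite IH; reflexivity. Qed.

Lemma R_h u v c1 c2 : wt u c1 = true -> wt v c2 = true ->
  hcomp (interp u c1) (interp v c2)
  = interp (u ++ v) (map (shift (length u)) c2 ++ c1).
Proof.
  intros W1 W2.
  destruct (interp_good _ _ W1) as [G1 O1].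
  destruct (interp_good _ _ W2) as [G2 O2].
  pose proof G1 as (T1 & L1 & R1). pose proof G2 as (T2 & L2 & R2).
  pose proof (wt_wordok _ _ W1) as Ou. pose proof (wt_wordok _ _ W2) as Ov.
  rewrite <- R1, <- L2.
  erewrite ichg; [| tyauto ..].
  destruct (interp_whisk u [] v c2 W2 Ou eq_refl) as (Wa & Oa & Ia).
  destruct (interp_whisk [] (out v c2) u c1 W1 eq_refl O2) as (Wb & Ob & Ib).
  rewrite !app_nil_r in Oa. rewrite ?app_nil_r in Ia, Wa. simpl in Ib, Wb, Ob. rewrite map_shift0 in Ib, Wb, Ob.
  simpl B in Ia, Ib. rewrite hcomp_id_r in Ia. rewrite hcomp_id_l in Ib.
  rewrite Ia, Ib, <- Oa. symmetry. apply interp_app.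
  apply wt_app_intro; auto. rewrite Oa. exact Wb.
Qed.

Lemma R_v u v c1 c2 : wt u (c1 ++ c2) = true -> leqb v (out u c1) = true ->
  vcomp (interp v c2) (interp u c1) = interp u (c1 ++ c2).
Proof. intros W E. apply leqb_eq in E. subst v. symmetry; apply interp_app; auto. Qed.

Lemma R_atom a : vatom a = true -> ac a = interp (asrc a) [(0, a)].
Proof.
  intro V. destruct (Hatom a V) as (T & L & R).
  cbn [interp lay firstn]. rewrite Nat.add_0_l, skipn_all. cbn [B]. rewrite hcomp_id_l, hcomp_id_r.
  unfold step. cbn [firstn app]. rewrite Nat.add_0_l, skipn_all, app_nil_r. symmetry; exact L.
Qed.

End Interp.


Section Inst.
Variable K : TwoCat.
Variable A : obj K.
Variable D : wdl2_data A.
Hypothesis HW : is_wdl2 D.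

Definition hS (i : nat) : hom A A := match i with 0 => s0 D | 1 => s1 D | _ => s2 D end.
Definition bS (i : nat) : cell A A := match i with 0 => b0 D | 1 => b1 D | _ => b2 D end.
Definition ac (a : atom) : cell A A :=
  match a with
  | Mu 0 => m0 D | Mu 1 => m1 D | Mu _ => m2 D
  | Eta 0 => e0 D | Eta 1 => e1 D | Eta _ => e2 D
  | Lam 0 1 => l01 D | Lam 0 2 => l02 D | Lam _ _ => l12 D
  end.
Definition I := interp K A bS ac.

Lemma monads : bar_monad (s0 D) (b0 D) (m0 D) (e0 D) /\ bar_monad (s1 D) (b1 D) (m1 D) (e1 D)
  /\ bar_monad (s2 D) (b2 D) (m2 D) (e2 D).
Proof. destruct HW as ((M1 & M0 & _) & (M2 & _) & _). auto. Qed.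

Lemma Hlet : forall i, i < 3 -> src (bS i) = hS i /\ tgt (bS i) = hS i /\ vcomp (bS i) (bS i) = bS i.
Proof.
  destruct monads as (M0 & M1 & M2).
  intros [|[|[|i]]] Hi; [destruct M0 as ((? & ? & ?) & _)|destruct M1 as ((? & ? & ?) & _)
    |destruct M2 as ((? & ? & ?) & _)|lia]; simpl; auto.
Qed.

Lemma good_mon t tb mu eta i : bar_monad t tb mu eta -> hS i = t -> bS i = tb ->
  good K A hS bS mu [i; i] [i] /\ good K A hS bS eta [] [i].
Proof.
  intros (Id & (S1 & T1 & L1 & R1) & (S2 & T2 & L2 & R2) & _) Eh Eb.
  split; (split; [split|split]); simpl; rewrite ?Eh, ?Eb; auto.
Qed.

Lemma good_lam t tb mut etat s sb mus etas lam i j :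
  wdl t tb mut etat s sb mus etas lam -> hS j = t -> bS j = tb -> hS i = s -> bS i = sb ->
  good K A hS bS lam [j; i] [i; j].
Proof.
  intros (_ & _ & (S1 & T1 & L1 & R1) & _) Et Etb Es Esb.
  (split; [split|split]); simpl; rewrite ?Et, ?Etb, ?Es, ?Esb; auto.
Qed.

Lemma Hatom : forall a, vatom a = true -> good K A hS bS (ac a) (asrc a) (atgt a).
Proof.
  destruct HW as (W01 & W02 & W12 & _).
  destruct monads as (M0 & M1 & M2).
  intros [i|i|i j] Hv; simpl in Hv.
  - destruct i as [|[|[|i]]];
      [exact (proj1 (good_mon _ _ _ _ 0 M0 eq_refl eq_refl))|exact (proj1 (good_mon _ _ _ _ 1 M1 eq_refl eq_refl))
      |exact (proj1 (good_mon _ _ _ _ 2 M2 eq_refl eq_refl))|discriminate].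
  - destruct i as [|[|[|i]]];
      [exact (proj2 (good_mon _ _ _ _ 0 M0 eq_refl eq_refl))|exact (proj2 (good_mon _ _ _ _ 1 M1 eq_refl eq_refl))
      |exact (proj2 (good_mon _ _ _ _ 2 M2 eq_refl eq_refl))|discriminate].
  - apply andb_true_iff in Hv; destruct Hv as [H1 H2]. apply Nat.ltb_lt in H1. apply Nat.ltb_lt in H2.
    destruct i as [|[|i]]; [destruct j as [|[|[|j]]]|destruct j as [|[|[|j]]]|]; try lia.
    + eapply good_lam; [exact W01|..]; reflexivity.
    + eapply good_lam; [exact W02|..]; reflexivity.
    + eapply good_lam; [exact W12|..]; reflexivity.
Qed.

Definition step_ok' := step_ok K A hS bS ac Hlet Hatom.
Definition conv_ok' := conv_ok K A hS bS ac Hlet Hatom.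
Definition R_h' := R_h K A hS bS ac Hlet Hatom.
Definition R_v' := R_v K A hS bS ac Hlet Hatom.

Lemma Rat a : vatom a = true -> ac a = interp K A bS ac (asrc a) [(0, a)].
Proof. exact (R_atom K A hS bS ac Hatom a). Qed.
Lemma Rm0 : m0 D = interp K A bS ac [0;0] [(0, Mu 0)]. Proof. exact (Rat (Mu 0) eq_refl). Qed.
Lemma Rm1 : m1 D = interp K A bS ac [1;1] [(0, Mu 1)]. Proof. exact (Rat (Mu 1) eq_refl). Qed.
Lemma Rm2 : m2 D = interp K A bS ac [2;2] [(0, Mu 2)]. Proof. exact (Rat (Mu 2) eq_refl). Qed.
Lemma Re0 : e0 D = interp K A bS ac [] [(0, Eta 0)]. Proof. exact (Rat (Eta 0) eq_refl). Qed.
Lemma Re1 : e1 D = interp K A bS ac [] [(0, Eta 1)]. Proof. exact (Rat (Eta 1) eq_refl). Qed.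
Lemma Re2 : e2 D = interp K A bS ac [] [(0, Eta 2)]. Proof. exact (Rat (Eta 2) eq_refl). Qed.
Lemma Rl01 : l01 D = interp K A bS ac [1;0] [(0, Lam 0 1)]. Proof. exact (Rat (Lam 0 1) eq_refl). Qed.
Lemma Rl02 : l02 D = interp K A bS ac [2;0] [(0, Lam 0 2)]. Proof. exact (Rat (Lam 0 2) eq_refl). Qed.
Lemma Rl12 : l12 D = interp K A bS ac [2;1] [(0, Lam 1 2)]. Proof. exact (Rat (Lam 1 2) eq_refl). Qed.
Lemma Rb0 : b0 D = interp K A bS ac [0] []. Proof. reflexivity. Qed.
Lemma Rb1 : b1 D = interp K A bS ac [1] []. Proof. reflexivity. Qed.
Lemma Rb2 : b2 D = interp K A bS ac [2] []. Proof. reflexivity. Qed.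
Lemma Rid : id2 (id1 A) = interp K A bS ac [] []. Proof. reflexivity. Qed.

Ltac reify_atoms_in E :=
  rewrite ?Rm0, ?Rm1, ?Rm2, ?Re0, ?Re1, ?Re2, ?Rl01, ?Rl02, ?Rl12, ?Rb0, ?Rb1, ?Rb2, ?Rid in E.
Ltac reify_atoms :=
  rewrite ?Rm0, ?Rm1, ?Rm2, ?Re0, ?Re1, ?Re2, ?Rl01, ?Rl02, ?Rl12, ?Rb0, ?Rb1, ?Rb2, ?Rid.
Ltac reify_in E :=
  reify_atoms_in E;
  repeat first [ rewrite R_h' in E by (vm_compute; reflexivity)
               | rewrite R_v' in E by (vm_compute; reflexivity) ].
Ltac reify :=
  reify_atoms;
  repeat first [ rewrite R_h' by (vm_compute; reflexivity)
               | rewrite R_v' by (vm_compute; reflexivity) ].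
Ltac close_with E :=
  match type of E with ?L = ?R =>
    transitivity L; [apply conv_ok'; vm_compute; reflexivity|];
    rewrite E; apply conv_ok'; vm_compute; reflexivity
  end.

Lemma r_ass0 : I [0; 0; 0] [(0, Mu 0); (0, Mu 0)] = I [0; 0; 0] [(1, Mu 0); (0, Mu 0)].
Proof. destruct monads as ((_ & _ & _ & E & _ & _) & _ & _). reify_in E. close_with E. Qed.

Lemma r_unl0 : I [0] [(1, Eta 0); (0, Mu 0)] = I [0] [].
Proof. destruct monads as ((_ & _ & _ & _ & E & _) & _ & _). reify_in E. close_with E. Qed.

Lemma r_unr0 : I [0] [(0, Eta 0); (0, Mu 0)] = I [0] [].
Proof. destruct monads as ((_ & _ & _ & _ & _ & E) & _ & _). reify_in E. close_with E. Qed.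

Lemma r_ass1 : I [1; 1; 1] [(0, Mu 1); (0, Mu 1)] = I [1; 1; 1] [(1, Mu 1); (0, Mu 1)].
Proof. destruct monads as (_ & (_ & _ & _ & E & _ & _) & _). reify_in E. close_with E. Qed.

Lemma r_unl1 : I [1] [(1, Eta 1); (0, Mu 1)] = I [1] [].
Proof. destruct monads as (_ & (_ & _ & _ & _ & E & _) & _). reify_in E. close_with E. Qed.

Lemma r_unr1 : I [1] [(0, Eta 1); (0, Mu 1)] = I [1] [].
Proof. destruct monads as (_ & (_ & _ & _ & _ & _ & E) & _). reify_in E. close_with E. Qed.

Lemma r_ass2 : I [2; 2; 2] [(0, Mu 2); (0, Mu 2)] = I [2; 2; 2] [(1, Mu 2); (0, Mu 2)].
Proof. destruct monads as (_ & _ & (_ & _ & _ & E & _ & _)). reify_in E. close_with E. Qed.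

Lemma r_unl2 : I [2] [(1, Eta 2); (0, Mu 2)] = I [2] [].
Proof. destruct monads as (_ & _ & (_ & _ & _ & _ & E & _)). reify_in E. close_with E. Qed.

Lemma r_unr2 : I [2] [(0, Eta 2); (0, Mu 2)] = I [2] [].
Proof. destruct monads as (_ & _ & (_ & _ & _ & _ & _ & E)). reify_in E. close_with E. Qed.

Lemma r_w1_01 : I [1; 1; 0] [(0, Mu 1); (0, Lam 0 1)] = I [1; 1; 0] [(1, Lam 0 1); (0, Lam 0 1); (1, Mu 1)].
Proof. destruct HW as ((_ & _ & _ & E & _ & _ & _) & _ & _ & _). reify_in E. close_with E. Qed.

Lemma r_w2_01 : I [1; 0; 0] [(1, Mu 0); (0, Lam 0 1)] = I [1; 0; 0] [(0, Lam 0 1); (1, Lam 0 1); (0, Mu 0)].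
Proof. destruct HW as ((_ & _ & _ & _ & E & _ & _) & _ & _ & _). reify_in E. close_with E. Qed.

Lemma r_w3_01 : I [0] [(0, Eta 1); (0, Lam 0 1)] = I [0] [(1, Eta 1); (2, Eta 0); (1, Lam 0 1); (0, Mu 0)].
Proof. destruct HW as ((_ & _ & _ & _ & _ & E & _) & _ & _ & _). reify_in E. close_with E. Qed.

Lemma r_w4_01 : I [1] [(1, Eta 0); (0, Lam 0 1)] = I [1] [(0, Eta 0); (0, Eta 1); (0, Lam 0 1); (1, Mu 1)].
Proof. destruct HW as ((_ & _ & _ & _ & _ & _ & E) & _ & _ & _). reify_in E. close_with E. Qed.

Lemma r_w1_02 : I [2; 2; 0] [(0, Mu 2); (0, Lam 0 2)] = I [2; 2; 0] [(1, Lam 0 2); (0, Lam 0 2); (1, Mu 2)].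
Proof. destruct HW as (_ & (_ & _ & _ & E & _ & _ & _) & _ & _). reify_in E. close_with E. Qed.

Lemma r_w2_02 : I [2; 0; 0] [(1, Mu 0); (0, Lam 0 2)] = I [2; 0; 0] [(0, Lam 0 2); (1, Lam 0 2); (0, Mu 0)].
Proof. destruct HW as (_ & (_ & _ & _ & _ & E & _ & _) & _ & _). reify_in E. close_with E. Qed.

Lemma r_w3_02 : I [0] [(0, Eta 2); (0, Lam 0 2)] = I [0] [(1, Eta 2); (2, Eta 0); (1, Lam 0 2); (0, Mu 0)].
Proof. destruct HW as (_ & (_ & _ & _ & _ & _ & E & _) & _ & _). reify_in E. close_with E. Qed.

Lemma r_w4_02 : I [2] [(1, Eta 0); (0, Lam 0 2)] = I [2] [(0, Eta 0); (0, Eta 2); (0, Lam 0 2); (1, Mu 2)].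
Proof. destruct HW as (_ & (_ & _ & _ & _ & _ & _ & E) & _ & _). reify_in E. close_with E. Qed.

Lemma r_w1_12 : I [2; 2; 1] [(0, Mu 2); (0, Lam 1 2)] = I [2; 2; 1] [(1, Lam 1 2); (0, Lam 1 2); (1, Mu 2)].
Proof. destruct HW as (_ & _ & (_ & _ & _ & E & _ & _ & _) & _). reify_in E. close_with E. Qed.

Lemma r_w2_12 : I [2; 1; 1] [(1, Mu 1); (0, Lam 1 2)] = I [2; 1; 1] [(0, Lam 1 2); (1, Lam 1 2); (0, Mu 1)].
Proof. destruct HW as (_ & _ & (_ & _ & _ & _ & E & _ & _) & _). reify_in E. close_with E. Qed.

Lemma r_w3_12 : I [1] [(0, Eta 2); (0, Lam 1 2)] = I [1] [(1, Eta 2); (2, Eta 1); (1, Lam 1 2); (0, Mu 1)].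
Proof. destruct HW as (_ & _ & (_ & _ & _ & _ & _ & E & _) & _). reify_in E. close_with E. Qed.

Lemma r_w4_12 : I [2] [(1, Eta 1); (0, Lam 1 2)] = I [2] [(0, Eta 1); (0, Eta 2); (0, Lam 1 2); (1, Mu 2)].
Proof. destruct HW as (_ & _ & (_ & _ & _ & _ & _ & _ & E) & _). reify_in E. close_with E. Qed.

Lemma r_yb : I [2; 1; 0] [(0, Lam 1 2); (1, Lam 0 2); (0, Lam 0 1)] = I [2; 1; 0] [(1, Lam 0 1); (0, Lam 0 2); (1, Lam 1 2)].
Proof. destruct HW as (_ & _ & _ & E). reify_in E. close_with E. Qed.

Lemma r_g1_01 : I [0; 1] [(2, Eta 0); (1, Lam 0 1); (0, Mu 0)] = I [0; 1] [(0, Eta 1); (0, Lam 0 1); (1, Mu 1)].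
Proof.
  transitivity (I [0; 1] [(1, Eta 0); (1, Eta 1); (1, Lam 0 1); (0, Mu 0); (1, Mu 1)]). { apply (step_ok' [0; 1] _ [(1, Eta 0); (1, Eta 1); (1, Lam 0 1); (0, Mu 0); (1, Mu 1)] [1] [(1, Eta 0); (0, Lam 0 1)] [(0, Eta 0); (0, Eta 1); (0, Lam 0 1); (1, Mu 1)] [] [(0, Mu 0)] 1); [vm_compute; reflexivity | exact r_w4_01]. }
  transitivity (I [0; 1] [(0, Eta 1); (0, Lam 0 1); (1, Mu 1)]). { apply (step_ok' [0; 1] _ [(0, Eta 1); (0, Lam 0 1); (1, Mu 1)] [0] [(1, Eta 1); (2, Eta 0); (1, Lam 0 1); (0, Mu 0)] [(0, Eta 1); (0, Lam 0 1)] [] [(1, Mu 1)] 0); [vm_compute; reflexivity | exact (eq_sym r_w3_01)]. }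
  apply conv_ok'; vm_compute; reflexivity.
Qed.

Lemma r_g2_01 : I [1; 0] [(0, Lam 0 1); (2, Eta 0); (1, Lam 0 1); (0, Mu 0)] = I [1; 0] [(0, Lam 0 1)].
Proof.
  transitivity (I [1; 0] [(2, Eta 0); (1, Mu 0); (0, Lam 0 1)]). { apply (step_ok' [1; 0] _ [(2, Eta 0); (1, Mu 0); (0, Lam 0 1)] [1; 0; 0] [(0, Lam 0 1); (1, Lam 0 1); (0, Mu 0)] [(1, Mu 0); (0, Lam 0 1)] [(2, Eta 0)] [] 0); [vm_compute; reflexivity | exact (eq_sym r_w2_01)]. }
  transitivity (I [1; 0] [(0, Lam 0 1)]). { apply (step_ok' [1; 0] _ [(0, Lam 0 1)] [0] [(1, Eta 0); (0, Mu 0)] [] [] [(0, Lam 0 1)] 1); [vm_compute; reflexivity | exact r_unl0]. }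
  apply conv_ok'; vm_compute; reflexivity.
Qed.

Lemma r_g3_01 : I [0; 0; 1] [(3, Eta 0); (2, Lam 0 1); (1, Mu 0); (0, Mu 0)] = I [0; 0; 1] [(0, Mu 0); (2, Eta 0); (1, Lam 0 1); (0, Mu 0)].
Proof.
  transitivity (I [0; 0; 1] [(0, Mu 0); (2, Eta 0); (1, Lam 0 1); (0, Mu 0)]). { apply (step_ok' [0; 0; 1] _ [(0, Mu 0); (2, Eta 0); (1, Lam 0 1); (0, Mu 0)] [0; 0; 0] [(1, Mu 0); (0, Mu 0)] [(0, Mu 0); (0, Mu 0)] [(3, Eta 0); (2, Lam 0 1)] [] 0); [vm_compute; reflexivity | exact (eq_sym r_ass0)]. }
  apply conv_ok'; vm_compute; reflexivity.
Qed.

Lemma r_g4_01 : I [0; 1] [(2, Eta 0); (1, Lam 0 1); (0, Mu 0); (2, Eta 0); (1, Lam 0 1); (0, Mu 0)] = I [0; 1] [(2, Eta 0); (1, Lam 0 1); (0, Mu 0)].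
Proof.
  transitivity (I [0; 1] [(2, Eta 0); (1, Lam 0 1); (3, Eta 0); (2, Lam 0 1); (1, Mu 0); (0, Mu 0)]). { apply (step_ok' [0; 1] _ [(2, Eta 0); (1, Lam 0 1); (3, Eta 0); (2, Lam 0 1); (1, Mu 0); (0, Mu 0)] [0; 0; 0] [(0, Mu 0); (0, Mu 0)] [(1, Mu 0); (0, Mu 0)] [(2, Eta 0); (1, Lam 0 1); (3, Eta 0); (2, Lam 0 1)] [] 0); [vm_compute; reflexivity | exact r_ass0]. }
  transitivity (I [0; 1] [(2, Eta 0); (1, Lam 0 1); (0, Mu 0)]). { apply (step_ok' [0; 1] _ [(2, Eta 0); (1, Lam 0 1); (0, Mu 0)] [1; 0] [(0, Lam 0 1); (2, Eta 0); (1, Lam 0 1); (0, Mu 0)] [(0, Lam 0 1)] [(2, Eta 0)] [(0, Mu 0)] 1); [vm_compute; reflexivity | exact r_g2_01]. }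
  apply conv_ok'; vm_compute; reflexivity.
Qed.

Lemma r_g1_02 : I [0; 2] [(2, Eta 0); (1, Lam 0 2); (0, Mu 0)] = I [0; 2] [(0, Eta 2); (0, Lam 0 2); (1, Mu 2)].
Proof.
  transitivity (I [0; 2] [(1, Eta 0); (1, Eta 2); (1, Lam 0 2); (0, Mu 0); (1, Mu 2)]). { apply (step_ok' [0; 2] _ [(1, Eta 0); (1, Eta 2); (1, Lam 0 2); (0, Mu 0); (1, Mu 2)] [2] [(1, Eta 0); (0, Lam 0 2)] [(0, Eta 0); (0, Eta 2); (0, Lam 0 2); (1, Mu 2)] [] [(0, Mu 0)] 1); [vm_compute; reflexivity | exact r_w4_02]. }
  transitivity (I [0; 2] [(0, Eta 2); (0, Lam 0 2); (1, Mu 2)]). { apply (step_ok' [0; 2] _ [(0, Eta 2); (0, Lam 0 2); (1, Mu 2)] [0] [(1, Eta 2); (2, Eta 0); (1, Lam 0 2); (0, Mu 0)] [(0, Eta 2); (0, Lam 0 2)] [] [(1, Mu 2)] 0); [vm_compute; reflexivity | exact (eq_sym r_w3_02)]. }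
  apply conv_ok'; vm_compute; reflexivity.
Qed.

Lemma r_g2_02 : I [2; 0] [(0, Lam 0 2); (2, Eta 0); (1, Lam 0 2); (0, Mu 0)] = I [2; 0] [(0, Lam 0 2)].
Proof.
  transitivity (I [2; 0] [(2, Eta 0); (1, Mu 0); (0, Lam 0 2)]). { apply (step_ok' [2; 0] _ [(2, Eta 0); (1, Mu 0); (0, Lam 0 2)] [2; 0; 0] [(0, Lam 0 2); (1, Lam 0 2); (0, Mu 0)] [(1, Mu 0); (0, Lam 0 2)] [(2, Eta 0)] [] 0); [vm_compute; reflexivity | exact (eq_sym r_w2_02)]. }
  transitivity (I [2; 0] [(0, Lam 0 2)]). { apply (step_ok' [2; 0] _ [(0, Lam 0 2)] [0] [(1, Eta 0); (0, Mu 0)] [] [] [(0, Lam 0 2)] 1); [vm_compute; reflexivity | exact r_unl0]. }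
  apply conv_ok'; vm_compute; reflexivity.
Qed.

Lemma r_g3_02 : I [0; 0; 2] [(3, Eta 0); (2, Lam 0 2); (1, Mu 0); (0, Mu 0)] = I [0; 0; 2] [(0, Mu 0); (2, Eta 0); (1, Lam 0 2); (0, Mu 0)].
Proof.
  transitivity (I [0; 0; 2] [(0, Mu 0); (2, Eta 0); (1, Lam 0 2); (0, Mu 0)]). { apply (step_ok' [0; 0; 2] _ [(0, Mu 0); (2, Eta 0); (1, Lam 0 2); (0, Mu 0)] [0; 0; 0] [(1, Mu 0); (0, Mu 0)] [(0, Mu 0); (0, Mu 0)] [(3, Eta 0); (2, Lam 0 2)] [] 0); [vm_compute; reflexivity | exact (eq_sym r_ass0)]. }
  apply conv_ok'; vm_compute; reflexivity.
Qed.

Lemma r_g4_02 : I [0; 2] [(2, Eta 0); (1, Lam 0 2); (0, Mu 0); (2, Eta 0); (1, Lam 0 2); (0, Mu 0)] = I [0; 2] [(2, Eta 0); (1, Lam 0 2); (0, Mu 0)].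
Proof.
  transitivity (I [0; 2] [(2, Eta 0); (1, Lam 0 2); (3, Eta 0); (2, Lam 0 2); (1, Mu 0); (0, Mu 0)]). { apply (step_ok' [0; 2] _ [(2, Eta 0); (1, Lam 0 2); (3, Eta 0); (2, Lam 0 2); (1, Mu 0); (0, Mu 0)] [0; 0; 0] [(0, Mu 0); (0, Mu 0)] [(1, Mu 0); (0, Mu 0)] [(2, Eta 0); (1, Lam 0 2); (3, Eta 0); (2, Lam 0 2)] [] 0); [vm_compute; reflexivity | exact r_ass0]. }
  transitivity (I [0; 2] [(2, Eta 0); (1, Lam 0 2); (0, Mu 0)]). { apply (step_ok' [0; 2] _ [(2, Eta 0); (1, Lam 0 2); (0, Mu 0)] [2; 0] [(0, Lam 0 2); (2, Eta 0); (1, Lam 0 2); (0, Mu 0)] [(0, Lam 0 2)] [(2, Eta 0)] [(0, Mu 0)] 1); [vm_compute; reflexivity | exact r_g2_02]. }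
  apply conv_ok'; vm_compute; reflexivity.
Qed.

Lemma r_g1_12 : I [1; 2] [(2, Eta 1); (1, Lam 1 2); (0, Mu 1)] = I [1; 2] [(0, Eta 2); (0, Lam 1 2); (1, Mu 2)].
Proof.
  transitivity (I [1; 2] [(1, Eta 1); (1, Eta 2); (1, Lam 1 2); (0, Mu 1); (1, Mu 2)]). { apply (step_ok' [1; 2] _ [(1, Eta 1); (1, Eta 2); (1, Lam 1 2); (0, Mu 1); (1, Mu 2)] [2] [(1, Eta 1); (0, Lam 1 2)] [(0, Eta 1); (0, Eta 2); (0, Lam 1 2); (1, Mu 2)] [] [(0, Mu 1)] 1); [vm_compute; reflexivity | exact r_w4_12]. }
  transitivity (I [1; 2] [(0, Eta 2); (0, Lam 1 2); (1, Mu 2)]). { apply (step_ok' [1; 2] _ [(0, Eta 2); (0, Lam 1 2); (1, Mu 2)] [1] [(1, Eta 2); (2, Eta 1); (1, Lam 1 2); (0, Mu 1)] [(0, Eta 2); (0, Lam 1 2)] [] [(1, Mu 2)] 0); [vm_compute; reflexivity | exact (eq_sym r_w3_12)]. }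
  apply conv_ok'; vm_compute; reflexivity.
Qed.

Lemma r_g2_12 : I [2; 1] [(0, Lam 1 2); (2, Eta 1); (1, Lam 1 2); (0, Mu 1)] = I [2; 1] [(0, Lam 1 2)].
Proof.
  transitivity (I [2; 1] [(2, Eta 1); (1, Mu 1); (0, Lam 1 2)]). { apply (step_ok' [2; 1] _ [(2, Eta 1); (1, Mu 1); (0, Lam 1 2)] [2; 1; 1] [(0, Lam 1 2); (1, Lam 1 2); (0, Mu 1)] [(1, Mu 1); (0, Lam 1 2)] [(2, Eta 1)] [] 0); [vm_compute; reflexivity | exact (eq_sym r_w2_12)]. }
  transitivity (I [2; 1] [(0, Lam 1 2)]). { apply (step_ok' [2; 1] _ [(0, Lam 1 2)] [1] [(1, Eta 1); (0, Mu 1)] [] [] [(0, Lam 1 2)] 1); [vm_compute; reflexivity | exact r_unl1]. }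
  apply conv_ok'; vm_compute; reflexivity.
Qed.

Lemma r_g3_12 : I [1; 1; 2] [(3, Eta 1); (2, Lam 1 2); (1, Mu 1); (0, Mu 1)] = I [1; 1; 2] [(0, Mu 1); (2, Eta 1); (1, Lam 1 2); (0, Mu 1)].
Proof.
  transitivity (I [1; 1; 2] [(0, Mu 1); (2, Eta 1); (1, Lam 1 2); (0, Mu 1)]). { apply (step_ok' [1; 1; 2] _ [(0, Mu 1); (2, Eta 1); (1, Lam 1 2); (0, Mu 1)] [1; 1; 1] [(1, Mu 1); (0, Mu 1)] [(0, Mu 1); (0, Mu 1)] [(3, Eta 1); (2, Lam 1 2)] [] 0); [vm_compute; reflexivity | exact (eq_sym r_ass1)]. }
  apply conv_ok'; vm_compute; reflexivity.
Qed.

Lemma r_g4_12 : I [1; 2] [(2, Eta 1); (1, Lam 1 2); (0, Mu 1); (2, Eta 1); (1, Lam 1 2); (0, Mu 1)] = I [1; 2] [(2, Eta 1); (1, Lam 1 2); (0, Mu 1)].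
Proof.
  transitivity (I [1; 2] [(2, Eta 1); (1, Lam 1 2); (3, Eta 1); (2, Lam 1 2); (1, Mu 1); (0, Mu 1)]). { apply (step_ok' [1; 2] _ [(2, Eta 1); (1, Lam 1 2); (3, Eta 1); (2, Lam 1 2); (1, Mu 1); (0, Mu 1)] [1; 1; 1] [(0, Mu 1); (0, Mu 1)] [(1, Mu 1); (0, Mu 1)] [(2, Eta 1); (1, Lam 1 2); (3, Eta 1); (2, Lam 1 2)] [] 0); [vm_compute; reflexivity | exact r_ass1]. }
  transitivity (I [1; 2] [(2, Eta 1); (1, Lam 1 2); (0, Mu 1)]). { apply (step_ok' [1; 2] _ [(2, Eta 1); (1, Lam 1 2); (0, Mu 1)] [2; 1] [(0, Lam 1 2); (2, Eta 1); (1, Lam 1 2); (0, Mu 1)] [(0, Lam 1 2)] [(2, Eta 1)] [(0, Mu 1)] 1); [vm_compute; reflexivity | exact r_g2_12]. }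
  apply conv_ok'; vm_compute; reflexivity.
Qed.

Lemma r_Lidem : I [0; 1; 2] [(0, Eta 2); (0, Lam 0 2); (1, Lam 1 2); (2, Mu 2); (0, Eta 2); (0, Lam 0 2); (1, Lam 1 2); (2, Mu 2)] = I [0; 1; 2] [(0, Eta 2); (0, Lam 0 2); (1, Lam 1 2); (2, Mu 2)].
Proof.
  transitivity (I [0; 1; 2] [(0, Eta 2); (0, Eta 2); (1, Lam 0 2); (0, Lam 0 2); (2, Lam 1 2); (1, Lam 1 2); (2, Mu 2); (2, Mu 2)]). { apply (step_ok' [0; 1; 2] _ [(0, Eta 2); (0, Eta 2); (1, Lam 0 2); (0, Lam 0 2); (2, Lam 1 2); (1, Lam 1 2); (2, Mu 2); (2, Mu 2)] [2; 2; 2] [(1, Mu 2); (0, Mu 2)] [(0, Mu 2); (0, Mu 2)] [(0, Eta 2); (0, Eta 2); (1, Lam 0 2); (0, Lam 0 2); (2, Lam 1 2); (1, Lam 1 2)] [] 2); [vm_compute; reflexivity | exact (eq_sym r_ass2)]. }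
  transitivity (I [0; 1; 2] [(0, Eta 2); (0, Eta 2); (1, Lam 0 2); (0, Lam 0 2); (1, Mu 2); (1, Lam 1 2); (2, Mu 2)]). { apply (step_ok' [0; 1; 2] _ [(0, Eta 2); (0, Eta 2); (1, Lam 0 2); (0, Lam 0 2); (1, Mu 2); (1, Lam 1 2); (2, Mu 2)] [2; 2; 1] [(1, Lam 1 2); (0, Lam 1 2); (1, Mu 2)] [(0, Mu 2); (0, Lam 1 2)] [(0, Eta 2); (0, Eta 2); (1, Lam 0 2); (0, Lam 0 2)] [(2, Mu 2)] 1); [vm_compute; reflexivity | exact (eq_sym r_w1_12)]. }
  transitivity (I [0; 1; 2] [(0, Eta 2); (0, Eta 2); (0, Mu 2); (0, Lam 0 2); (1, Lam 1 2); (2, Mu 2)]). { apply (step_ok' [0; 1; 2] _ [(0, Eta 2); (0, Eta 2); (0, Mu 2); (0, Lam 0 2); (1, Lam 1 2); (2, Mu 2)] [2; 2; 0] [(1, Lam 0 2); (0, Lam 0 2); (1, Mu 2)] [(0, Mu 2); (0, Lam 0 2)] [(0, Eta 2); (0, Eta 2)] [(1, Lam 1 2); (2, Mu 2)] 0); [vm_compute; reflexivity | exact (eq_sym r_w1_02)]. }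
  transitivity (I [0; 1; 2] [(0, Eta 2); (0, Lam 0 2); (1, Lam 1 2); (2, Mu 2)]). { apply (step_ok' [0; 1; 2] _ [(0, Eta 2); (0, Lam 0 2); (1, Lam 1 2); (2, Mu 2)] [2] [(1, Eta 2); (0, Mu 2)] [] [(0, Eta 2)] [(0, Lam 0 2); (1, Lam 1 2); (2, Mu 2)] 0); [vm_compute; reflexivity | exact r_unl2]. }
  apply conv_ok'; vm_compute; reflexivity.
Qed.

Lemma r_claimA : I [2; 0; 1] [(3, Eta 0); (2, Lam 0 1); (1, Mu 0); (0, Lam 0 2); (1, Lam 1 2); (2, Eta 0); (1, Lam 0 1); (0, Mu 0)] = I [2; 0; 1] [(3, Eta 0); (2, Lam 0 1); (1, Mu 0); (0, Lam 0 2); (1, Lam 1 2)].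
Proof.
  transitivity (I [2; 0; 1] [(0, Lam 0 2); (3, Eta 0); (2, Lam 0 1); (1, Lam 0 2); (0, Mu 0); (1, Lam 1 2); (2, Eta 0); (1, Lam 0 1); (0, Mu 0)]). { apply (step_ok' [2; 0; 1] _ [(0, Lam 0 2); (3, Eta 0); (2, Lam 0 1); (1, Lam 0 2); (0, Mu 0); (1, Lam 1 2); (2, Eta 0); (1, Lam 0 1); (0, Mu 0)] [2; 0; 0] [(1, Mu 0); (0, Lam 0 2)] [(0, Lam 0 2); (1, Lam 0 2); (0, Mu 0)] [(3, Eta 0); (2, Lam 0 1)] [(1, Lam 1 2); (2, Eta 0); (1, Lam 0 1); (0, Mu 0)] 0); [vm_compute; reflexivity | exact r_w2_02]. }
  transitivity (I [2; 0; 1] [(0, Lam 0 2); (3, Eta 0); (2, Lam 0 1); (1, Lam 0 2); (2, Lam 1 2); (3, Eta 0); (2, Lam 0 1); (1, Mu 0); (0, Mu 0)]). { apply (step_ok' [2; 0; 1] _ [(0, Lam 0 2); (3, Eta 0); (2, Lam 0 1); (1, Lam 0 2); (2, Lam 1 2); (3, Eta 0); (2, Lam 0 1); (1, Mu 0); (0, Mu 0)] [0; 0; 0] [(0, Mu 0); (0, Mu 0)] [(1, Mu 0); (0, Mu 0)] [(0, Lam 0 2); (3, Eta 0); (2, Lam 0 1); (1, Lam 0 2); (2, Lam 1 2); (3, Eta 0); (2, Lam 0 1)] [] 0); [vm_compute; reflexivity | exact r_ass0]. }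
  transitivity (I [2; 0; 1] [(0, Lam 0 2); (1, Lam 1 2); (3, Eta 0); (2, Lam 0 2); (1, Lam 0 1); (3, Eta 0); (2, Lam 0 1); (1, Mu 0); (0, Mu 0)]). { apply (step_ok' [2; 0; 1] _ [(0, Lam 0 2); (1, Lam 1 2); (3, Eta 0); (2, Lam 0 2); (1, Lam 0 1); (3, Eta 0); (2, Lam 0 1); (1, Mu 0); (0, Mu 0)] [2; 1; 0] [(1, Lam 0 1); (0, Lam 0 2); (1, Lam 1 2)] [(0, Lam 1 2); (1, Lam 0 2); (0, Lam 0 1)] [(0, Lam 0 2); (3, Eta 0)] [(3, Eta 0); (2, Lam 0 1); (1, Mu 0); (0, Mu 0)] 1); [vm_compute; reflexivity | exact (eq_sym r_yb)]. }
  transitivity (I [2; 0; 1] [(0, Lam 0 2); (1, Lam 1 2); (3, Eta 0); (2, Lam 0 2); (1, Lam 0 1); (0, Mu 0)]). { apply (step_ok' [2; 0; 1] _ [(0, Lam 0 2); (1, Lam 1 2); (3, Eta 0); (2, Lam 0 2); (1, Lam 0 1); (0, Mu 0)] [1; 0] [(0, Lam 0 1); (2, Eta 0); (1, Lam 0 1); (0, Mu 0)] [(0, Lam 0 1)] [(0, Lam 0 2); (1, Lam 1 2); (3, Eta 0); (2, Lam 0 2)] [(0, Mu 0)] 1); [vm_compute; reflexivity | exact r_g2_01]. }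
  transitivity (I [2; 0; 1] [(0, Lam 0 2); (3, Eta 0); (2, Lam 0 1); (1, Lam 0 2); (0, Mu 0); (1, Lam 1 2)]). { apply (step_ok' [2; 0; 1] _ [(0, Lam 0 2); (3, Eta 0); (2, Lam 0 1); (1, Lam 0 2); (0, Mu 0); (1, Lam 1 2)] [2; 1; 0] [(0, Lam 1 2); (1, Lam 0 2); (0, Lam 0 1)] [(1, Lam 0 1); (0, Lam 0 2); (1, Lam 1 2)] [(0, Lam 0 2); (3, Eta 0)] [(0, Mu 0)] 1); [vm_compute; reflexivity | exact r_yb]. }
  transitivity (I [2; 0; 1] [(3, Eta 0); (2, Lam 0 1); (1, Mu 0); (0, Lam 0 2); (1, Lam 1 2)]). { apply (step_ok' [2; 0; 1] _ [(3, Eta 0); (2, Lam 0 1); (1, Mu 0); (0, Lam 0 2); (1, Lam 1 2)] [2; 0; 0] [(0, Lam 0 2); (1, Lam 0 2); (0, Mu 0)] [(1, Mu 0); (0, Lam 0 2)] [(3, Eta 0); (2, Lam 0 1)] [(1, Lam 1 2)] 0); [vm_compute; reflexivity | exact (eq_sym r_w2_02)]. }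
  apply conv_ok'; vm_compute; reflexivity.
Qed.

Lemma r_T1 : I [0; 1; 2] [(2, Eta 0); (1, Lam 0 1); (0, Mu 0); (0, Eta 2); (0, Lam 0 2); (1, Lam 1 2); (2, Mu 2); (2, Eta 0); (1, Lam 0 1); (0, Mu 0); (0, Eta 2); (0, Lam 0 2); (1, Lam 1 2); (2, Mu 2)] = I [0; 1; 2] [(2, Eta 0); (1, Lam 0 1); (0, Mu 0); (0, Eta 2); (0, Lam 0 2); (1, Lam 1 2); (2, Mu 2)].
Proof.
  transitivity (I [0; 1; 2] [(0, Eta 2); (0, Eta 2); (4, Eta 0); (3, Lam 0 1); (2, Mu 0); (1, Lam 0 2); (0, Lam 0 2); (2, Lam 1 2); (1, Lam 1 2); (3, Mu 2); (2, Mu 2)]). { apply (step_ok' [0; 1; 2] _ [(0, Eta 2); (0, Eta 2); (4, Eta 0); (3, Lam 0 1); (2, Mu 0); (1, Lam 0 2); (0, Lam 0 2); (2, Lam 1 2); (1, Lam 1 2); (3, Mu 2); (2, Mu 2)] [2; 0; 1] [(3, Eta 0); (2, Lam 0 1); (1, Mu 0); (0, Lam 0 2); (1, Lam 1 2); (2, Eta 0); (1, Lam 0 1); (0, Mu 0)] [(3, Eta 0); (2, Lam 0 1); (1, Mu 0); (0, Lam 0 2); (1, Lam 1 2)] [(0, Eta 2); (0, Eta 2)] [(3, Mu 2); (0, Lam 0 2); (1, Lam 1 2); (2, Mu 2)] 1); [vm_compute; reflexivity | exact r_claimA]. }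
  transitivity (I [0; 1; 2] [(0, Eta 2); (3, Eta 0); (2, Lam 0 1); (1, Mu 0); (0, Lam 0 2); (1, Lam 1 2); (2, Mu 2)]). { apply (step_ok' [0; 1; 2] _ [(0, Eta 2); (3, Eta 0); (2, Lam 0 1); (1, Mu 0); (0, Lam 0 2); (1, Lam 1 2); (2, Mu 2)] [0; 1; 2] [(0, Eta 2); (0, Lam 0 2); (1, Lam 1 2); (2, Mu 2); (0, Eta 2); (0, Lam 0 2); (1, Lam 1 2); (2, Mu 2)] [(0, Eta 2); (0, Lam 0 2); (1, Lam 1 2); (2, Mu 2)] [(2, Eta 0); (1, Lam 0 1); (0, Mu 0)] [] 0); [vm_compute; reflexivity | exact r_Lidem]. }
  apply conv_ok'; vm_compute; reflexivity.
Qed.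

Lemma r_T2 : I [0; 2] [(2, Eta 0); (1, Lam 0 2); (0, Mu 0); (1, Eta 1); (2, Eta 0); (1, Lam 0 1); (0, Mu 0); (0, Eta 2); (0, Lam 0 2); (1, Lam 1 2); (2, Mu 2)] = I [0; 2] [(1, Eta 1); (2, Eta 0); (1, Lam 0 1); (0, Mu 0); (0, Eta 2); (0, Lam 0 2); (1, Lam 1 2); (2, Mu 2)].
Proof.
  transitivity (I [0; 2] [(0, Eta 1); (0, Eta 2); (4, Eta 0); (3, Lam 0 2); (2, Mu 0); (1, Lam 0 1); (0, Lam 0 2); (1, Lam 1 2); (2, Mu 2)]). { apply (step_ok' [0; 2] _ [(0, Eta 1); (0, Eta 2); (4, Eta 0); (3, Lam 0 2); (2, Mu 0); (1, Lam 0 1); (0, Lam 0 2); (1, Lam 1 2); (2, Mu 2)] [0] [(1, Eta 1); (2, Eta 0); (1, Lam 0 1); (0, Mu 0)] [(0, Eta 1); (0, Lam 0 1)] [(0, Eta 2); (3, Eta 0); (2, Lam 0 2); (1, Mu 0)] [(0, Lam 0 2); (1, Lam 1 2); (2, Mu 2)] 1); [vm_compute; reflexivity | exact (eq_sym r_w3_01)]. }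
  transitivity (I [0; 2] [(0, Eta 1); (0, Eta 2); (0, Lam 1 2); (4, Eta 0); (3, Lam 0 2); (2, Mu 0); (1, Lam 0 2); (0, Lam 0 1); (2, Mu 2)]). { apply (step_ok' [0; 2] _ [(0, Eta 1); (0, Eta 2); (0, Lam 1 2); (4, Eta 0); (3, Lam 0 2); (2, Mu 0); (1, Lam 0 2); (0, Lam 0 1); (2, Mu 2)] [2; 1; 0] [(1, Lam 0 1); (0, Lam 0 2); (1, Lam 1 2)] [(0, Lam 1 2); (1, Lam 0 2); (0, Lam 0 1)] [(0, Eta 1); (0, Eta 2); (4, Eta 0); (3, Lam 0 2); (2, Mu 0)] [(2, Mu 2)] 0); [vm_compute; reflexivity | exact (eq_sym r_yb)]. }
  transitivity (I [0; 2] [(0, Eta 1); (0, Eta 2); (0, Lam 1 2); (2, Eta 2); (2, Lam 0 2); (1, Lam 0 2); (0, Lam 0 1); (3, Mu 2); (2, Mu 2)]). { apply (step_ok' [0; 2] _ [(0, Eta 1); (0, Eta 2); (0, Lam 1 2); (2, Eta 2); (2, Lam 0 2); (1, Lam 0 2); (0, Lam 0 1); (3, Mu 2); (2, Mu 2)] [0; 2] [(2, Eta 0); (1, Lam 0 2); (0, Mu 0)] [(0, Eta 2); (0, Lam 0 2); (1, Mu 2)] [(0, Eta 1); (0, Eta 2); (0, Lam 1 2)] [(1, Lam 0 2); (0, Lam 0 1); (2, Mu 2)] 2); [vm_compute; reflexivity | exact r_g1_02]. }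
  transitivity (I [0; 2] [(0, Eta 1); (0, Eta 2); (0, Lam 1 2); (2, Eta 2); (2, Lam 0 2); (1, Lam 0 2); (0, Lam 0 1); (2, Mu 2); (2, Mu 2)]). { apply (step_ok' [0; 2] _ [(0, Eta 1); (0, Eta 2); (0, Lam 1 2); (2, Eta 2); (2, Lam 0 2); (1, Lam 0 2); (0, Lam 0 1); (2, Mu 2); (2, Mu 2)] [2; 2; 2] [(1, Mu 2); (0, Mu 2)] [(0, Mu 2); (0, Mu 2)] [(0, Eta 1); (0, Eta 2); (0, Lam 1 2); (2, Eta 2); (2, Lam 0 2); (1, Lam 0 2); (0, Lam 0 1)] [] 2); [vm_compute; reflexivity | exact (eq_sym r_ass2)]. }
  transitivity (I [0; 2] [(0, Eta 1); (0, Eta 2); (0, Lam 1 2); (2, Eta 2); (1, Mu 2); (1, Lam 0 2); (0, Lam 0 1); (2, Mu 2)]). { apply (step_ok' [0; 2] _ [(0, Eta 1); (0, Eta 2); (0, Lam 1 2); (2, Eta 2); (1, Mu 2); (1, Lam 0 2); (0, Lam 0 1); (2, Mu 2)] [2; 2; 0] [(1, Lam 0 2); (0, Lam 0 2); (1, Mu 2)] [(0, Mu 2); (0, Lam 0 2)] [(0, Eta 1); (0, Eta 2); (0, Lam 1 2); (2, Eta 2)] [(0, Lam 0 1); (2, Mu 2)] 1); [vm_compute; reflexivity | exact (eq_sym r_w1_02)]. }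
  transitivity (I [0; 2] [(0, Eta 1); (0, Eta 2); (0, Lam 1 2); (1, Lam 0 2); (0, Lam 0 1); (2, Mu 2)]). { apply (step_ok' [0; 2] _ [(0, Eta 1); (0, Eta 2); (0, Lam 1 2); (1, Lam 0 2); (0, Lam 0 1); (2, Mu 2)] [2] [(1, Eta 2); (0, Mu 2)] [] [(0, Eta 1); (0, Eta 2); (0, Lam 1 2)] [(1, Lam 0 2); (0, Lam 0 1); (2, Mu 2)] 1); [vm_compute; reflexivity | exact r_unl2]. }
  transitivity (I [0; 2] [(0, Eta 1); (0, Eta 2); (1, Lam 0 1); (0, Lam 0 2); (1, Lam 1 2); (2, Mu 2)]). { apply (step_ok' [0; 2] _ [(0, Eta 1); (0, Eta 2); (1, Lam 0 1); (0, Lam 0 2); (1, Lam 1 2); (2, Mu 2)] [2; 1; 0] [(0, Lam 1 2); (1, Lam 0 2); (0, Lam 0 1)] [(1, Lam 0 1); (0, Lam 0 2); (1, Lam 1 2)] [(0, Eta 1); (0, Eta 2)] [(2, Mu 2)] 0); [vm_compute; reflexivity | exact r_yb]. }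
  transitivity (I [0; 2] [(0, Eta 2); (2, Eta 0); (2, Eta 1); (2, Lam 0 1); (1, Mu 0); (0, Lam 0 2); (1, Lam 1 2); (2, Mu 2)]). { apply (step_ok' [0; 2] _ [(0, Eta 2); (2, Eta 0); (2, Eta 1); (2, Lam 0 1); (1, Mu 0); (0, Lam 0 2); (1, Lam 1 2); (2, Mu 2)] [0] [(0, Eta 1); (0, Lam 0 1)] [(1, Eta 1); (2, Eta 0); (1, Lam 0 1); (0, Mu 0)] [(0, Eta 2)] [(0, Lam 0 2); (1, Lam 1 2); (2, Mu 2)] 1); [vm_compute; reflexivity | exact r_w3_01]. }
  apply conv_ok'; vm_compute; reflexivity.
Qed.

Lemma r_T3 : I [] [(0, Eta 0); (0, Eta 2); (0, Lam 0 2); (1, Eta 1); (2, Eta 0); (1, Lam 0 1); (0, Mu 0); (0, Eta 2); (0, Lam 0 2); (1, Lam 1 2); (2, Mu 2)] = I [] [(0, Eta 0); (0, Eta 1); (0, Eta 2); (1, Lam 0 1); (0, Lam 0 2); (1, Lam 1 2); (2, Eta 0); (1, Lam 0 1); (0, Mu 0); (0, Eta 2); (0, Lam 0 2); (1, Lam 1 2); (2, Mu 2)].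
Proof.
  transitivity (I [] [(0, Eta 0); (0, Eta 0); (0, Eta 2); (2, Eta 2); (2, Lam 0 2); (1, Mu 0); (2, Eta 0); (2, Eta 1); (2, Lam 0 1); (1, Mu 0); (0, Lam 0 2); (1, Lam 1 2); (2, Mu 2)]). { apply (step_ok' [] _ [(0, Eta 0); (0, Eta 0); (0, Eta 2); (2, Eta 2); (2, Lam 0 2); (1, Mu 0); (2, Eta 0); (2, Eta 1); (2, Lam 0 1); (1, Mu 0); (0, Lam 0 2); (1, Lam 1 2); (2, Mu 2)] [0] [] [(0, Eta 0); (0, Mu 0)] [(0, Eta 0); (0, Eta 2); (0, Eta 2); (1, Lam 0 2)] [(2, Eta 0); (2, Eta 1); (2, Lam 0 1); (1, Mu 0); (0, Lam 0 2); (1, Lam 1 2); (2, Mu 2)] 1); [vm_compute; reflexivity | exact (eq_sym r_unr0)]. }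
  transitivity (I [] [(0, Eta 0); (0, Eta 0); (0, Eta 2); (2, Eta 1); (2, Lam 0 1); (1, Mu 0); (0, Lam 0 2); (1, Lam 1 2); (3, Eta 2); (2, Mu 2)]). { apply (step_ok' [] _ [(0, Eta 0); (0, Eta 0); (0, Eta 2); (2, Eta 1); (2, Lam 0 1); (1, Mu 0); (0, Lam 0 2); (1, Lam 1 2); (3, Eta 2); (2, Mu 2)] [0; 2] [(2, Eta 0); (1, Lam 0 2); (0, Mu 0); (1, Eta 1); (2, Eta 0); (1, Lam 0 1); (0, Mu 0); (0, Eta 2); (0, Lam 0 2); (1, Lam 1 2); (2, Mu 2)] [(1, Eta 1); (2, Eta 0); (1, Lam 0 1); (0, Mu 0); (0, Eta 2); (0, Lam 0 2); (1, Lam 1 2); (2, Mu 2)] [(0, Eta 0); (1, Eta 2)] [] 0); [vm_compute; reflexivity | exact r_T2]. }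
  transitivity (I [] [(0, Eta 0); (0, Eta 0); (0, Eta 2); (0, Eta 2); (3, Eta 1); (3, Lam 0 1); (2, Mu 0); (1, Lam 0 2); (0, Lam 0 2); (2, Lam 1 2); (1, Lam 1 2); (4, Eta 2); (3, Mu 2); (2, Mu 2)]). { apply (step_ok' [] _ [(0, Eta 0); (0, Eta 0); (0, Eta 2); (0, Eta 2); (3, Eta 1); (3, Lam 0 1); (2, Mu 0); (1, Lam 0 2); (0, Lam 0 2); (2, Lam 1 2); (1, Lam 1 2); (4, Eta 2); (3, Mu 2); (2, Mu 2)] [0; 1; 2] [(0, Eta 2); (0, Lam 0 2); (1, Lam 1 2); (2, Mu 2)] [(0, Eta 2); (0, Lam 0 2); (1, Lam 1 2); (2, Mu 2); (0, Eta 2); (0, Lam 0 2); (1, Lam 1 2); (2, Mu 2)] [(0, Eta 0); (0, Eta 0); (1, Eta 1); (1, Lam 0 1); (0, Mu 0); (2, Eta 2)] [] 0); [vm_compute; reflexivity | exact (eq_sym r_Lidem)]. }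
  transitivity (I [] [(0, Eta 0); (0, Eta 0); (0, Eta 2); (0, Eta 2); (3, Eta 1); (3, Lam 0 1); (2, Mu 0); (1, Lam 0 2); (0, Lam 0 2); (2, Lam 1 2); (1, Lam 1 2); (2, Mu 2)]). { apply (step_ok' [] _ [(0, Eta 0); (0, Eta 0); (0, Eta 2); (0, Eta 2); (3, Eta 1); (3, Lam 0 1); (2, Mu 0); (1, Lam 0 2); (0, Lam 0 2); (2, Lam 1 2); (1, Lam 1 2); (2, Mu 2)] [2] [(1, Eta 2); (0, Mu 2)] [] [(0, Eta 0); (0, Eta 0); (0, Eta 2); (0, Eta 2); (3, Eta 1); (3, Lam 0 1); (2, Mu 0); (1, Lam 0 2); (0, Lam 0 2); (2, Lam 1 2)] [(1, Lam 1 2); (2, Mu 2)] 3); [vm_compute; reflexivity | exact r_unl2]. }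
  transitivity (I [] [(0, Eta 0); (0, Eta 0); (0, Eta 2); (0, Eta 2); (3, Eta 1); (3, Lam 0 1); (2, Mu 0); (1, Lam 0 2); (2, Lam 1 2); (3, Eta 0); (2, Lam 0 1); (1, Mu 0); (0, Lam 0 2); (1, Lam 1 2); (2, Mu 2)]). { apply (step_ok' [] _ [(0, Eta 0); (0, Eta 0); (0, Eta 2); (0, Eta 2); (3, Eta 1); (3, Lam 0 1); (2, Mu 0); (1, Lam 0 2); (2, Lam 1 2); (3, Eta 0); (2, Lam 0 1); (1, Mu 0); (0, Lam 0 2); (1, Lam 1 2); (2, Mu 2)] [2; 0; 1] [(3, Eta 0); (2, Lam 0 1); (1, Mu 0); (0, Lam 0 2); (1, Lam 1 2)] [(3, Eta 0); (2, Lam 0 1); (1, Mu 0); (0, Lam 0 2); (1, Lam 1 2); (2, Eta 0); (1, Lam 0 1); (0, Mu 0)] [(0, Eta 0); (0, Eta 2); (0, Eta 2); (3, Eta 1)] [(0, Lam 0 2); (1, Lam 1 2); (2, Mu 2)] 1); [vm_compute; reflexivity | exact (eq_sym r_claimA)]. }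
  transitivity (I [] [(0, Eta 0); (0, Eta 1); (0, Eta 2); (0, Eta 2); (2, Lam 0 1); (1, Lam 0 2); (2, Lam 1 2); (3, Eta 0); (2, Lam 0 1); (1, Mu 0); (0, Lam 0 2); (1, Lam 1 2); (2, Mu 2)]). { apply (step_ok' [] _ [(0, Eta 0); (0, Eta 1); (0, Eta 2); (0, Eta 2); (2, Lam 0 1); (1, Lam 0 2); (2, Lam 1 2); (3, Eta 0); (2, Lam 0 1); (1, Mu 0); (0, Lam 0 2); (1, Lam 1 2); (2, Mu 2)] [0] [(0, Eta 0); (0, Mu 0)] [] [(0, Eta 0); (0, Eta 1); (0, Eta 2); (0, Eta 2); (2, Lam 0 1)] [(1, Lam 0 2); (2, Lam 1 2); (3, Eta 0); (2, Lam 0 1); (1, Mu 0); (0, Lam 0 2); (1, Lam 1 2); (2, Mu 2)] 2); [vm_compute; reflexivity | exact r_unr0]. }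
  apply conv_ok'; vm_compute; reflexivity.
Qed.

Lemma r_jmult : I [0; 0] [(0, Mu 0); (1, Eta 1); (2, Eta 0); (1, Lam 0 1); (0, Mu 0)] = I [0; 0] [(2, Eta 1); (3, Eta 0); (2, Lam 0 1); (1, Mu 0); (1, Eta 1); (2, Eta 0); (1, Lam 0 1); (0, Mu 0); (1, Lam 0 1); (2, Mu 1); (0, Mu 0)].
Proof.
  transitivity (I [0; 0] [(0, Mu 0); (1, Eta 0); (1, Eta 0); (1, Eta 1); (1, Lam 0 1); (0, Mu 0); (1, Lam 0 1); (0, Mu 0)]). { apply (step_ok' [0; 0] _ [(0, Mu 0); (1, Eta 0); (1, Eta 0); (1, Eta 1); (1, Lam 0 1); (0, Mu 0); (1, Lam 0 1); (0, Mu 0)] [0; 1] [(2, Eta 0); (1, Lam 0 1); (0, Mu 0)] [(2, Eta 0); (1, Lam 0 1); (0, Mu 0); (2, Eta 0); (1, Lam 0 1); (0, Mu 0)] [(0, Mu 0); (1, Eta 1)] [] 0); [vm_compute; reflexivity | exact (eq_sym r_g4_01)]. }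
  transitivity (I [0; 0] [(0, Mu 0); (0, Eta 1); (2, Eta 0); (2, Eta 1); (2, Lam 0 1); (1, Mu 0); (0, Lam 0 1); (1, Mu 1)]). { apply (step_ok' [0; 0] _ [(0, Mu 0); (0, Eta 1); (2, Eta 0); (2, Eta 1); (2, Lam 0 1); (1, Mu 0); (0, Lam 0 1); (1, Mu 1)] [0; 1] [(2, Eta 0); (1, Lam 0 1); (0, Mu 0)] [(0, Eta 1); (0, Lam 0 1); (1, Mu 1)] [(0, Mu 0); (1, Eta 0); (1, Eta 1); (1, Lam 0 1); (0, Mu 0)] [] 0); [vm_compute; reflexivity | exact r_g1_01]. }
  transitivity (I [0; 0] [(0, Eta 1); (3, Eta 0); (3, Eta 1); (3, Lam 0 1); (2, Mu 0); (1, Mu 0); (0, Lam 0 1); (1, Mu 1)]). { apply (step_ok' [0; 0] _ [(0, Eta 1); (3, Eta 0); (3, Eta 1); (3, Lam 0 1); (2, Mu 0); (1, Mu 0); (0, Lam 0 1); (1, Mu 1)] [0; 0; 0] [(0, Mu 0); (0, Mu 0)] [(1, Mu 0); (0, Mu 0)] [(0, Eta 1); (3, Eta 0); (3, Eta 1); (3, Lam 0 1)] [(0, Lam 0 1); (1, Mu 1)] 1); [vm_compute; reflexivity | exact r_ass0]. }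
  transitivity (I [0; 0] [(0, Eta 1); (0, Lam 0 1); (3, Eta 0); (3, Eta 1); (3, Lam 0 1); (2, Mu 0); (1, Lam 0 1); (0, Mu 0); (1, Mu 1)]). { apply (step_ok' [0; 0] _ [(0, Eta 1); (0, Lam 0 1); (3, Eta 0); (3, Eta 1); (3, Lam 0 1); (2, Mu 0); (1, Lam 0 1); (0, Mu 0); (1, Mu 1)] [1; 0; 0] [(1, Mu 0); (0, Lam 0 1)] [(0, Lam 0 1); (1, Lam 0 1); (0, Mu 0)] [(0, Eta 1); (3, Eta 0); (3, Eta 1); (3, Lam 0 1); (2, Mu 0)] [(1, Mu 1)] 0); [vm_compute; reflexivity | exact r_w2_01]. }
  transitivity (I [0; 0] [(1, Eta 0); (1, Eta 1); (1, Lam 0 1); (0, Mu 0); (3, Eta 0); (3, Eta 1); (3, Lam 0 1); (2, Mu 0); (1, Lam 0 1); (0, Mu 0); (1, Mu 1)]). { apply (step_ok' [0; 0] _ [(1, Eta 0); (1, Eta 1); (1, Lam 0 1); (0, Mu 0); (3, Eta 0); (3, Eta 1); (3, Lam 0 1); (2, Mu 0); (1, Lam 0 1); (0, Mu 0); (1, Mu 1)] [0] [(0, Eta 1); (0, Lam 0 1)] [(1, Eta 1); (2, Eta 0); (1, Lam 0 1); (0, Mu 0)] [(2, Eta 0); (2, Eta 1); (2, Lam 0 1); (1, Mu 0)] [(1, Lam 0 1); (0, Mu 0); (1, Mu 1)] 0); [vm_compute; reflexivity | exact r_w3_01]. }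
  apply conv_ok'; vm_compute; reflexivity.
Qed.

Lemma r_W1L : I [2; 2; 0; 1] [(0, Mu 2); (0, Lam 0 2); (1, Lam 1 2)] = I [2; 2; 0; 1] [(1, Lam 0 2); (2, Lam 1 2); (0, Lam 0 2); (1, Lam 1 2); (2, Mu 2)].
Proof.
  transitivity (I [2; 2; 0; 1] [(1, Lam 0 2); (0, Lam 0 2); (1, Mu 2); (1, Lam 1 2)]). { apply (step_ok' [2; 2; 0; 1] _ [(1, Lam 0 2); (0, Lam 0 2); (1, Mu 2); (1, Lam 1 2)] [2; 2; 0] [(0, Mu 2); (0, Lam 0 2)] [(1, Lam 0 2); (0, Lam 0 2); (1, Mu 2)] [] [(1, Lam 1 2)] 0); [vm_compute; reflexivity | exact r_w1_02]. }
  transitivity (I [2; 2; 0; 1] [(1, Lam 0 2); (0, Lam 0 2); (2, Lam 1 2); (1, Lam 1 2); (2, Mu 2)]). { apply (step_ok' [2; 2; 0; 1] _ [(1, Lam 0 2); (0, Lam 0 2); (2, Lam 1 2); (1, Lam 1 2); (2, Mu 2)] [2; 2; 1] [(0, Mu 2); (0, Lam 1 2)] [(1, Lam 1 2); (0, Lam 1 2); (1, Mu 2)] [(1, Lam 0 2); (0, Lam 0 2)] [] 1); [vm_compute; reflexivity | exact r_w1_12]. }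
  apply conv_ok'; vm_compute; reflexivity.
Qed.

Lemma r_W2L : I [2; 0; 1; 0; 1] [(2, Lam 0 1); (3, Mu 1); (1, Mu 0); (0, Lam 0 2); (1, Lam 1 2)] = I [2; 0; 1; 0; 1] [(0, Lam 0 2); (1, Lam 1 2); (2, Lam 0 2); (3, Lam 1 2); (1, Lam 0 1); (2, Mu 1); (0, Mu 0)].
Proof.
  transitivity (I [2; 0; 1; 0; 1] [(0, Lam 0 2); (2, Lam 0 1); (1, Lam 0 2); (0, Mu 0); (2, Mu 1); (1, Lam 1 2)]). { apply (step_ok' [2; 0; 1; 0; 1] _ [(0, Lam 0 2); (2, Lam 0 1); (1, Lam 0 2); (0, Mu 0); (2, Mu 1); (1, Lam 1 2)] [2; 0; 0] [(1, Mu 0); (0, Lam 0 2)] [(0, Lam 0 2); (1, Lam 0 2); (0, Mu 0)] [(2, Lam 0 1); (3, Mu 1)] [(1, Lam 1 2)] 0); [vm_compute; reflexivity | exact r_w2_02]. }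
  transitivity (I [2; 0; 1; 0; 1] [(0, Lam 0 2); (2, Lam 0 1); (1, Lam 0 2); (0, Mu 0); (1, Lam 1 2); (2, Lam 1 2); (1, Mu 1)]). { apply (step_ok' [2; 0; 1; 0; 1] _ [(0, Lam 0 2); (2, Lam 0 1); (1, Lam 0 2); (0, Mu 0); (1, Lam 1 2); (2, Lam 1 2); (1, Mu 1)] [2; 1; 1] [(1, Mu 1); (0, Lam 1 2)] [(0, Lam 1 2); (1, Lam 1 2); (0, Mu 1)] [(0, Lam 0 2); (2, Lam 0 1); (1, Lam 0 2); (0, Mu 0)] [] 1); [vm_compute; reflexivity | exact r_w2_12]. }
  transitivity (I [2; 0; 1; 0; 1] [(0, Lam 0 2); (1, Lam 1 2); (2, Lam 0 2); (1, Lam 0 1); (0, Mu 0); (2, Lam 1 2); (1, Mu 1)]). { apply (step_ok' [2; 0; 1; 0; 1] _ [(0, Lam 0 2); (1, Lam 1 2); (2, Lam 0 2); (1, Lam 0 1); (0, Mu 0); (2, Lam 1 2); (1, Mu 1)] [2; 1; 0] [(1, Lam 0 1); (0, Lam 0 2); (1, Lam 1 2)] [(0, Lam 1 2); (1, Lam 0 2); (0, Lam 0 1)] [(0, Lam 0 2)] [(0, Mu 0); (2, Lam 1 2); (1, Mu 1)] 1); [vm_compute; reflexivity | exact (eq_sym r_yb)]. }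
  apply conv_ok'; vm_compute; reflexivity.
Qed.

Lemma r_compat : I [2; 0] [(2, Eta 1); (3, Eta 0); (2, Lam 0 1); (1, Mu 0); (0, Lam 0 2); (1, Lam 1 2)] = I [2; 0] [(0, Lam 0 2); (1, Eta 1); (2, Eta 0); (1, Lam 0 1); (0, Mu 0); (0, Eta 2); (0, Lam 0 2); (1, Lam 1 2); (2, Mu 2)].
Proof.
  transitivity (I [2; 0] [(1, Eta 1); (1, Lam 0 1); (0, Lam 0 2); (1, Lam 1 2)]). { apply (step_ok' [2; 0] _ [(1, Eta 1); (1, Lam 0 1); (0, Lam 0 2); (1, Lam 1 2)] [0] [(1, Eta 1); (2, Eta 0); (1, Lam 0 1); (0, Mu 0)] [(0, Eta 1); (0, Lam 0 1)] [] [(0, Lam 0 2); (1, Lam 1 2)] 1); [vm_compute; reflexivity | exact (eq_sym r_w3_01)]. }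
  transitivity (I [2; 0] [(1, Eta 1); (0, Lam 1 2); (1, Lam 0 2); (0, Lam 0 1)]). { apply (step_ok' [2; 0] _ [(1, Eta 1); (0, Lam 1 2); (1, Lam 0 2); (0, Lam 0 1)] [2; 1; 0] [(1, Lam 0 1); (0, Lam 0 2); (1, Lam 1 2)] [(0, Lam 1 2); (1, Lam 0 2); (0, Lam 0 1)] [(1, Eta 1)] [] 0); [vm_compute; reflexivity | exact (eq_sym r_yb)]. }
  transitivity (I [2; 0] [(0, Eta 1); (0, Eta 2); (0, Lam 1 2); (1, Mu 2); (1, Lam 0 2); (0, Lam 0 1)]). { apply (step_ok' [2; 0] _ [(0, Eta 1); (0, Eta 2); (0, Lam 1 2); (1, Mu 2); (1, Lam 0 2); (0, Lam 0 1)] [2] [(1, Eta 1); (0, Lam 1 2)] [(0, Eta 1); (0, Eta 2); (0, Lam 1 2); (1, Mu 2)] [] [(1, Lam 0 2); (0, Lam 0 1)] 0); [vm_compute; reflexivity | exact r_w4_12]. }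
  transitivity (I [2; 0] [(0, Eta 1); (0, Eta 2); (0, Lam 1 2); (2, Lam 0 2); (1, Lam 0 2); (0, Lam 0 1); (2, Mu 2)]). { apply (step_ok' [2; 0] _ [(0, Eta 1); (0, Eta 2); (0, Lam 1 2); (2, Lam 0 2); (1, Lam 0 2); (0, Lam 0 1); (2, Mu 2)] [2; 2; 0] [(0, Mu 2); (0, Lam 0 2)] [(1, Lam 0 2); (0, Lam 0 2); (1, Mu 2)] [(0, Eta 1); (0, Eta 2); (0, Lam 1 2)] [(0, Lam 0 1)] 1); [vm_compute; reflexivity | exact r_w1_02]. }
  transitivity (I [2; 0] [(0, Eta 1); (0, Eta 2); (2, Lam 0 2); (1, Lam 0 1); (0, Lam 0 2); (1, Lam 1 2); (2, Mu 2)]). { apply (step_ok' [2; 0] _ [(0, Eta 1); (0, Eta 2); (2, Lam 0 2); (1, Lam 0 1); (0, Lam 0 2); (1, Lam 1 2); (2, Mu 2)] [2; 1; 0] [(0, Lam 1 2); (1, Lam 0 2); (0, Lam 0 1)] [(1, Lam 0 1); (0, Lam 0 2); (1, Lam 1 2)] [(0, Eta 1); (0, Eta 2); (2, Lam 0 2)] [(2, Mu 2)] 0); [vm_compute; reflexivity | exact r_yb]. }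
  transitivity (I [2; 0] [(0, Eta 2); (1, Lam 0 2); (2, Eta 0); (2, Eta 1); (2, Lam 0 1); (1, Mu 0); (0, Lam 0 2); (1, Lam 1 2); (2, Mu 2)]). { apply (step_ok' [2; 0] _ [(0, Eta 2); (1, Lam 0 2); (2, Eta 0); (2, Eta 1); (2, Lam 0 1); (1, Mu 0); (0, Lam 0 2); (1, Lam 1 2); (2, Mu 2)] [0] [(0, Eta 1); (0, Lam 0 1)] [(1, Eta 1); (2, Eta 0); (1, Lam 0 1); (0, Mu 0)] [(0, Eta 2); (1, Lam 0 2)] [(0, Lam 0 2); (1, Lam 1 2); (2, Mu 2)] 1); [vm_compute; reflexivity | exact r_w3_01]. }
  apply conv_ok'; vm_compute; reflexivity.
Qed.

Lemma r_alpha : I [0; 1; 2; 0; 1; 2] [(3, Eta 2); (3, Lam 0 2); (4, Lam 1 2); (5, Mu 2); (2, Lam 0 2); (1, Lam 0 1); (3, Lam 1 2); (4, Mu 2); (2, Mu 1); (0, Mu 0)] = I [0; 1; 2; 0; 1; 2] [(2, Lam 0 2); (1, Lam 0 1); (3, Lam 1 2); (4, Mu 2); (2, Mu 1); (0, Mu 0)].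
Proof.
  transitivity (I [0; 1; 2; 0; 1; 2] [(3, Eta 2); (3, Lam 0 2); (2, Lam 0 2); (1, Lam 0 1); (0, Mu 0); (3, Lam 1 2); (2, Lam 1 2); (1, Mu 1); (2, Mu 2); (2, Mu 2)]). { apply (step_ok' [0; 1; 2; 0; 1; 2] _ [(3, Eta 2); (3, Lam 0 2); (2, Lam 0 2); (1, Lam 0 1); (0, Mu 0); (3, Lam 1 2); (2, Lam 1 2); (1, Mu 1); (2, Mu 2); (2, Mu 2)] [2; 2; 2] [(1, Mu 2); (0, Mu 2)] [(0, Mu 2); (0, Mu 2)] [(3, Eta 2); (3, Lam 0 2); (2, Lam 0 2); (1, Lam 0 1); (0, Mu 0); (3, Lam 1 2); (2, Lam 1 2); (1, Mu 1)] [] 2); [vm_compute; reflexivity | exact (eq_sym r_ass2)]. }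
  transitivity (I [0; 1; 2; 0; 1; 2] [(3, Eta 2); (2, Mu 2); (2, Lam 0 2); (1, Lam 0 1); (0, Mu 0); (2, Lam 1 2); (1, Mu 1); (2, Mu 2)]). { apply (step_ok' [0; 1; 2; 0; 1; 2] _ [(3, Eta 2); (2, Mu 2); (2, Lam 0 2); (1, Lam 0 1); (0, Mu 0); (2, Lam 1 2); (1, Mu 1); (2, Mu 2)] [2; 2; 0; 1] [(1, Lam 0 2); (2, Lam 1 2); (0, Lam 0 2); (1, Lam 1 2); (2, Mu 2)] [(0, Mu 2); (0, Lam 0 2); (1, Lam 1 2)] [(3, Eta 2)] [(1, Lam 0 1); (0, Mu 0); (1, Mu 1); (2, Mu 2)] 2); [vm_compute; reflexivity | exact (eq_sym r_W1L)]. }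
  transitivity (I [0; 1; 2; 0; 1; 2] [(2, Lam 0 2); (1, Lam 0 1); (0, Mu 0); (2, Lam 1 2); (1, Mu 1); (2, Mu 2)]). { apply (step_ok' [0; 1; 2; 0; 1; 2] _ [(2, Lam 0 2); (1, Lam 0 1); (0, Mu 0); (2, Lam 1 2); (1, Mu 1); (2, Mu 2)] [2] [(1, Eta 2); (0, Mu 2)] [] [] [(2, Lam 0 2); (1, Lam 0 1); (0, Mu 0); (2, Lam 1 2); (1, Mu 1); (2, Mu 2)] 2); [vm_compute; reflexivity | exact r_unl2]. }
  apply conv_ok'; vm_compute; reflexivity.
Qed.

Lemma r_beta : I [0; 1; 2; 0; 1; 2] [(0, Eta 2); (0, Lam 0 2); (1, Lam 1 2); (2, Mu 2); (2, Lam 0 2); (1, Lam 0 1); (3, Lam 1 2); (4, Mu 2); (2, Mu 1); (0, Mu 0)] = I [0; 1; 2; 0; 1; 2] [(2, Lam 0 2); (1, Lam 0 1); (3, Lam 1 2); (4, Mu 2); (2, Mu 1); (0, Mu 0); (0, Eta 2); (0, Lam 0 2); (1, Lam 1 2); (2, Mu 2)].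
Proof.
  transitivity (I [0; 1; 2; 0; 1; 2] [(0, Eta 2); (0, Lam 0 2); (1, Lam 1 2); (3, Lam 0 2); (2, Lam 0 2); (1, Lam 0 1); (0, Mu 0); (3, Lam 1 2); (2, Lam 1 2); (1, Mu 1); (2, Mu 2); (2, Mu 2)]). { apply (step_ok' [0; 1; 2; 0; 1; 2] _ [(0, Eta 2); (0, Lam 0 2); (1, Lam 1 2); (3, Lam 0 2); (2, Lam 0 2); (1, Lam 0 1); (0, Mu 0); (3, Lam 1 2); (2, Lam 1 2); (1, Mu 1); (2, Mu 2); (2, Mu 2)] [2; 2; 0; 1] [(0, Mu 2); (0, Lam 0 2); (1, Lam 1 2)] [(1, Lam 0 2); (2, Lam 1 2); (0, Lam 0 2); (1, Lam 1 2); (2, Mu 2)] [(0, Eta 2); (0, Lam 0 2); (1, Lam 1 2)] [(1, Lam 0 1); (0, Mu 0); (1, Mu 1); (2, Mu 2)] 2); [vm_compute; reflexivity | exact r_W1L]. }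
  transitivity (I [0; 1; 2; 0; 1; 2] [(0, Eta 2); (0, Lam 0 2); (1, Lam 1 2); (3, Lam 0 2); (2, Lam 0 2); (1, Lam 0 1); (0, Mu 0); (3, Lam 1 2); (2, Lam 1 2); (1, Mu 1); (3, Mu 2); (2, Mu 2)]). { apply (step_ok' [0; 1; 2; 0; 1; 2] _ [(0, Eta 2); (0, Lam 0 2); (1, Lam 1 2); (3, Lam 0 2); (2, Lam 0 2); (1, Lam 0 1); (0, Mu 0); (3, Lam 1 2); (2, Lam 1 2); (1, Mu 1); (3, Mu 2); (2, Mu 2)] [2; 2; 2] [(0, Mu 2); (0, Mu 2)] [(1, Mu 2); (0, Mu 2)] [(0, Eta 2); (0, Lam 0 2); (1, Lam 1 2); (3, Lam 0 2); (2, Lam 0 2); (1, Lam 0 1); (0, Mu 0); (3, Lam 1 2); (2, Lam 1 2); (1, Mu 1)] [] 2); [vm_compute; reflexivity | exact r_ass2]. }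
  transitivity (I [0; 1; 2; 0; 1; 2] [(0, Eta 2); (3, Lam 0 2); (2, Lam 0 1); (1, Mu 0); (0, Lam 0 2); (3, Lam 1 2); (2, Mu 1); (1, Lam 1 2); (3, Mu 2); (2, Mu 2)]). { apply (step_ok' [0; 1; 2; 0; 1; 2] _ [(0, Eta 2); (3, Lam 0 2); (2, Lam 0 1); (1, Mu 0); (0, Lam 0 2); (3, Lam 1 2); (2, Mu 1); (1, Lam 1 2); (3, Mu 2); (2, Mu 2)] [2; 0; 1; 0; 1] [(0, Lam 0 2); (1, Lam 1 2); (2, Lam 0 2); (3, Lam 1 2); (1, Lam 0 1); (2, Mu 1); (0, Mu 0)] [(2, Lam 0 1); (3, Mu 1); (1, Mu 0); (0, Lam 0 2); (1, Lam 1 2)] [(0, Eta 2); (3, Lam 0 2); (4, Lam 1 2); (5, Mu 2)] [(2, Mu 2)] 0); [vm_compute; reflexivity | exact (eq_sym r_W2L)]. }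
  apply conv_ok'; vm_compute; reflexivity.
Qed.

Lemma r_g5_01 : I [0; 1; 0; 1] [(1, Lam 0 1); (2, Mu 1); (0, Mu 0); (2, Eta 0); (1, Lam 0 1); (0, Mu 0)] = I [0; 1; 0; 1] [(1, Lam 0 1); (2, Mu 1); (0, Mu 0)].
Proof.
  transitivity (I [0; 1; 0; 1] [(1, Lam 0 1); (2, Mu 1); (3, Eta 0); (2, Lam 0 1); (1, Mu 0); (0, Mu 0)]). { apply (step_ok' [0; 1; 0; 1] _ [(1, Lam 0 1); (2, Mu 1); (3, Eta 0); (2, Lam 0 1); (1, Mu 0); (0, Mu 0)] [0; 0; 0] [(0, Mu 0); (0, Mu 0)] [(1, Mu 0); (0, Mu 0)] [(1, Lam 0 1); (2, Mu 1); (3, Eta 0); (2, Lam 0 1)] [] 0); [vm_compute; reflexivity | exact r_ass0]. }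
  transitivity (I [0; 1; 0; 1] [(1, Lam 0 1); (2, Mu 1); (2, Eta 0); (2, Eta 1); (2, Lam 0 1); (1, Mu 0); (0, Mu 0); (1, Mu 1)]). { apply (step_ok' [0; 1; 0; 1] _ [(1, Lam 0 1); (2, Mu 1); (2, Eta 0); (2, Eta 1); (2, Lam 0 1); (1, Mu 0); (0, Mu 0); (1, Mu 1)] [1] [(1, Eta 0); (0, Lam 0 1)] [(0, Eta 0); (0, Eta 1); (0, Lam 0 1); (1, Mu 1)] [(1, Lam 0 1); (2, Mu 1)] [(1, Mu 0); (0, Mu 0)] 2); [vm_compute; reflexivity | exact r_w4_01]. }
  transitivity (I [0; 1; 0; 1] [(1, Lam 0 1); (2, Eta 0); (2, Eta 1); (2, Lam 0 1); (1, Mu 0); (0, Mu 0); (1, Mu 1); (1, Mu 1)]). { apply (step_ok' [0; 1; 0; 1] _ [(1, Lam 0 1); (2, Eta 0); (2, Eta 1); (2, Lam 0 1); (1, Mu 0); (0, Mu 0); (1, Mu 1); (1, Mu 1)] [1; 1; 1] [(1, Mu 1); (0, Mu 1)] [(0, Mu 1); (0, Mu 1)] [(1, Lam 0 1); (2, Eta 0); (2, Eta 1); (2, Lam 0 1); (1, Mu 0); (0, Mu 0)] [] 1); [vm_compute; reflexivity | exact (eq_sym r_ass1)]. }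
  transitivity (I [0; 1; 0; 1] [(1, Lam 0 1); (3, Eta 0); (2, Lam 0 1); (1, Mu 0); (0, Mu 0); (1, Mu 1)]). { apply (step_ok' [0; 1; 0; 1] _ [(1, Lam 0 1); (3, Eta 0); (2, Lam 0 1); (1, Mu 0); (0, Mu 0); (1, Mu 1)] [1] [(0, Eta 0); (0, Eta 1); (0, Lam 0 1); (1, Mu 1)] [(1, Eta 0); (0, Lam 0 1)] [(1, Lam 0 1)] [(1, Mu 0); (0, Mu 0); (1, Mu 1)] 2); [vm_compute; reflexivity | exact (eq_sym r_w4_01)]. }
  transitivity (I [0; 1; 0; 1] [(1, Lam 0 1); (0, Mu 0); (1, Mu 1)]). { apply (step_ok' [0; 1; 0; 1] _ [(1, Lam 0 1); (0, Mu 0); (1, Mu 1)] [1; 0] [(0, Lam 0 1); (2, Eta 0); (1, Lam 0 1); (0, Mu 0)] [(0, Lam 0 1)] [] [(0, Mu 0); (1, Mu 1)] 1); [vm_compute; reflexivity | exact r_g2_01]. }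
  apply conv_ok'; vm_compute; reflexivity.
Qed.

Lemma r_T4a : I [0; 2; 0; 2] [(1, Lam 0 2); (2, Mu 2); (0, Mu 0); (1, Eta 1); (2, Eta 0); (1, Lam 0 1); (0, Mu 0); (0, Eta 2); (0, Lam 0 2); (1, Lam 1 2); (2, Mu 2)] = I [0; 2; 0; 2] [(1, Lam 0 2); (2, Eta 1); (3, Eta 0); (2, Lam 0 1); (1, Mu 0); (1, Eta 1); (2, Eta 0); (1, Lam 0 1); (0, Mu 0); (1, Lam 0 1); (2, Mu 1); (0, Mu 0); (2, Mu 2); (0, Eta 2); (0, Lam 0 2); (1, Lam 1 2); (2, Mu 2)].
Proof.
  transitivity (I [0; 2; 0; 2] [(0, Eta 2); (2, Eta 0); (2, Eta 1); (2, Lam 0 1); (1, Mu 0); (3, Lam 0 2); (4, Mu 2); (4, Eta 0); (4, Eta 1); (4, Lam 0 1); (3, Mu 0); (2, Lam 0 1); (1, Mu 0); (0, Lam 0 2); (2, Mu 1); (1, Lam 1 2); (2, Mu 2)]). { apply (step_ok' [0; 2; 0; 2] _ [(0, Eta 2); (2, Eta 0); (2, Eta 1); (2, Lam 0 1); (1, Mu 0); (3, Lam 0 2); (4, Mu 2); (4, Eta 0); (4, Eta 1); (4, Lam 0 1); (3, Mu 0); (2, Lam 0 1); (1, Mu 0); (0, Lam 0 2); (2, Mu 1); (1, Lam 1 2); (2, Mu 2)] [0; 0] [(0, Mu 0); (1, Eta 1); (2, Eta 0); (1, Lam 0 1); (0, Mu 0)] [(2, Eta 1); (3, Eta 0); (2,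 Lam 0 1); (1, Mu 0); (1, Eta 1); (2, Eta 0); (1, Lam 0 1); (0, Mu 0); (1, Lam 0 1); (2, Mu 1); (0, Mu 0)] [(0, Eta 2); (2, Lam 0 2); (3, Mu 2)] [(0, Lam 0 2); (1, Lam 1 2); (2, Mu 2)] 1); [vm_compute; reflexivity | exact r_jmult]. }
  apply conv_ok'; vm_compute; reflexivity.
Qed.

Lemma r_etaj : I [0] [(1, Eta 1); (2, Eta 0); (1, Lam 0 1); (0, Mu 0); (0, Eta 2); (0, Lam 0 2); (1, Lam 1 2)] = I [0] [(1, Eta 1); (2, Eta 0); (1, Lam 0 1); (0, Mu 0); (2, Eta 2); (0, Eta 2); (0, Lam 0 2); (1, Lam 1 2); (2, Mu 2)].
Proof.
  transitivity (I [0] [(0, Eta 2); (2, Eta 0); (2, Eta 1); (2, Lam 0 1); (1, Mu 0); (0, Lam 0 2); (1, Lam 1 2); (3, Eta 2); (2, Mu 2)]). { apply (step_ok' [0] _ [(0, Eta 2); (2, Eta 0); (2, Eta 1); (2, Lam 0 1); (1, Mu 0); (0, Lam 0 2); (1, Lam 1 2); (3, Eta 2); (2, Mu 2)] [2] [] [(1, Eta 2); (0, Mu 2)] [(0, Eta 2); (2, Eta 0); (2, Eta 1); (2, Lam 0 1); (1, Mu 0); (0, Lam 0 2); (1, Lam 1 2)] [] 2); [vm_compute; reflexivity | exact (eq_sym r_unl2)]. }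
  apply conv_ok'; vm_compute; reflexivity.
Qed.

Lemma r_T4b : I [0; 2; 0; 2] [(3, Eta 1); (4, Eta 0); (3, Lam 0 1); (2, Mu 0); (2, Eta 2); (2, Lam 0 2); (3, Lam 1 2); (4, Mu 2); (1, Eta 1); (2, Eta 0); (1, Lam 0 1); (0, Mu 0); (0, Eta 2); (0, Lam 0 2); (1, Lam 1 2); (2, Mu 2); (2, Lam 0 2); (1, Lam 0 1); (3, Lam 1 2); (4, Mu 2); (2, Mu 1); (0, Mu 0); (2, Eta 0); (1, Lam 0 1); (0, Mu 0); (0, Eta 2); (0, Lam 0 2); (1, Lam 1 2); (2, Mu 2)] = I [0; 2; 0; 2] [(3, Eta 1); (4, Eta 0); (3, Lam 0 1); (2, Mu 0); (1, Eta 1); (2, Eta 0); (1, Lam 0 1); (0, Mu 0); (2, Lam 0 2); (1, Lam 0 1); (3, Lam 1 2); (4, Mu 2); (2, Mu 1); (0, Mu 0); (0, Eta 2); (0, Lam 0 2); (1, Lam 1 2); (2, Mu 2)].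
Proof.
  transitivity (I [0; 2; 0; 2] [(0, Eta 2); (0, Eta 2); (3, Eta 0); (3, Eta 1); (3, Lam 0 1); (2, Mu 0); (1, Lam 0 2); (2, Lam 1 2); (3, Mu 2); (5, Eta 0); (5, Eta 1); (5, Lam 0 1); (4, Mu 0); (3, Lam 0 2); (2, Lam 0 1); (1, Mu 0); (3, Lam 1 2); (2, Mu 1); (3, Mu 2); (3, Eta 0); (2, Lam 0 1); (1, Mu 0); (0, Lam 0 2); (1, Lam 1 2); (2, Mu 2)]). { apply (step_ok' [0; 2; 0; 2] _ [(0, Eta 2); (0, Eta 2); (3, Eta 0); (3, Eta 1); (3, Lam 0 1); (2, Mu 0); (1, Lam 0 2); (2, Lam 1 2); (3, Mu 2); (5, Eta 0); (5, Eta 1); (5, Lam 0 1); (4, Mu 0); (3, Lam 0 2); (2, Lam 0 1); (1, Mu 0); (3, Lam 1 2); (2, Mu 1); (3, Mu 2); (3, Eta 0); (2, Lam 0 1); (1, Mu 0); (0, Lam 0 2); (1, Lam 1 2); (2, Mu 2)] [0; 1; 2; 0; 1; 2] [(3, Eta 2); (3, Lam 0 2); (4, Lam 1 2); (5, Mu 2); (2, Lam 0 2); (1, Lam 0 1); (3, Lam 1 2); (4, Mu 2); (2, Mu 1); (0, Mu 0)] [(2, Lam 0 2); (1, Lam 0 1); (3, Lam 1 2); (4, Mu 2); (2, Mu 1); (0, Mu 0)] [(0, Eta 2); (0, Eta 2); (3, Eta 0); (3, Eta 1); (3, Lam 0 1); (2, Mu 0); (1, Lam 0 2); (2, Lam 1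 2); (3, Mu 2); (5, Eta 0); (5, Eta 1); (5, Lam 0 1); (4, Mu 0)] [(3, Eta 0); (2, Lam 0 1); (1, Mu 0); (0, Lam 0 2); (1, Lam 1 2); (2, Mu 2)] 1); [vm_compute; reflexivity | exact r_alpha]. }
  transitivity (I [0; 2; 0; 2] [(0, Eta 2); (0, Eta 2); (3, Eta 0); (3, Eta 1); (3, Lam 0 1); (2, Mu 0); (6, Eta 0); (6, Eta 1); (6, Lam 0 1); (5, Mu 0); (4, Lam 0 2); (3, Lam 0 1); (2, Mu 0); (1, Lam 0 2); (4, Lam 1 2); (3, Mu 1); (2, Lam 1 2); (3, Eta 0); (2, Lam 0 1); (1, Mu 0); (0, Lam 0 2); (1, Lam 1 2); (4, Mu 2); (3, Mu 2); (2, Mu 2)]). { apply (step_ok' [0; 2; 0; 2] _ [(0, Eta 2); (0, Eta 2); (3, Eta 0); (3, Eta 1); (3, Lam 0 1); (2, Mu 0); (6, Eta 0); (6, Eta 1); (6, Lam 0 1); (5, Mu 0); (4, Lam 0 2); (3, Lam 0 1); (2, Mu 0); (1, Lam 0 2); (4, Lam 1 2); (3, Mu 1); (2, Lam 1 2); (3, Eta 0); (2, Lam 0 1); (1, Mu 0); (0, Lam 0 2); (1, Lam 1 2); (4, Mu 2); (3, Mu 2); (2, Mu 2)] [0; 1; 2; 0; 1; 2] [(0, Eta 2); (0, Lam 0 2); (1, Lam 1 2); (2, Mu 2); (2, Lam 0 2); (1, Lam 0 1); (3, Lam 1 2); (4, Mu 2); (2, Mu 1); (0, Mu 0)] [(2,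 Lam 0 2); (1, Lam 0 1); (3, Lam 1 2); (4, Mu 2); (2, Mu 1); (0, Mu 0); (0, Eta 2); (0, Lam 0 2); (1, Lam 1 2); (2, Mu 2)] [(0, Eta 2); (2, Eta 0); (2, Eta 1); (2, Lam 0 1); (1, Mu 0); (5, Eta 0); (5, Eta 1); (5, Lam 0 1); (4, Mu 0)] [(3, Eta 0); (2, Lam 0 1); (1, Mu 0); (0, Lam 0 2); (1, Lam 1 2); (2, Mu 2)] 1); [vm_compute; reflexivity | exact r_beta]. }
  transitivity (I [0; 2; 0; 2] [(0, Eta 2); (0, Eta 2); (3, Eta 0); (3, Eta 1); (3, Lam 0 1); (2, Mu 0); (6, Eta 0); (6, Eta 1); (6, Lam 0 1); (5, Mu 0); (4, Lam 0 2); (3, Lam 0 1); (2, Mu 0); (4, Lam 1 2); (3, Mu 1); (4, Mu 2); (4, Eta 0); (3, Lam 0 1); (2, Mu 0); (1, Lam 0 2); (2, Lam 1 2); (3, Mu 2); (3, Eta 0); (2, Lam 0 1); (1, Mu 0); (0, Lam 0 2); (1, Lam 1 2); (2, Mu 2)]). { apply (step_ok' [0; 2; 0; 2] _ [(0, Eta 2); (0, Eta 2); (3, Eta 0); (3, Eta 1); (3, Lam 0 1); (2, Mu 0); (6, Eta 0); (6, Eta 1); (6, Lam 0 1); (5, Mu 0); (4, Lam 0 2); (3, Lam 0 1); (2, Mu 0); (4, Lam 1 2); (3, Mu 1); (4, Mu 2); (4, Eta 0); (3, Lam 0 1); (2, Mu 0); (1, Lam 0 2); (2, Lam 1 2); (3,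 Mu 2); (3, Eta 0); (2, Lam 0 1); (1, Mu 0); (0, Lam 0 2); (1, Lam 1 2); (2, Mu 2)] [0; 1; 0; 1] [(1, Lam 0 1); (2, Mu 1); (0, Mu 0)] [(1, Lam 0 1); (2, Mu 1); (0, Mu 0); (2, Eta 0); (1, Lam 0 1); (0, Mu 0)] [(0, Eta 2); (0, Eta 2); (3, Eta 0); (3, Eta 1); (3, Lam 0 1); (2, Mu 0); (6, Eta 0); (6, Eta 1); (6, Lam 0 1); (5, Mu 0); (4, Lam 0 2); (5, Lam 1 2); (6, Mu 2)] [(1, Lam 0 2); (2, Lam 1 2); (3, Eta 0); (2, Lam 0 1); (1, Mu 0); (0, Lam 0 2); (1, Lam 1 2); (3, Mu 2); (2, Mu 2)] 2); [vm_compute; reflexivity | exact (eq_sym r_g5_01)]. }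
  transitivity (I [0; 2; 0; 2] [(0, Eta 2); (2, Eta 0); (2, Eta 1); (2, Lam 0 1); (1, Mu 0); (5, Eta 0); (5, Eta 1); (5, Lam 0 1); (4, Mu 0); (3, Lam 0 2); (2, Lam 0 1); (1, Mu 0); (3, Lam 1 2); (2, Mu 1); (3, Mu 2); (3, Eta 0); (2, Lam 0 1); (1, Mu 0); (0, Lam 0 2); (1, Lam 1 2); (2, Mu 2)]). { apply (step_ok' [0; 2; 0; 2] _ [(0, Eta 2); (2, Eta 0); (2, Eta 1); (2, Lam 0 1); (1, Mu 0); (5, Eta 0); (5, Eta 1); (5, Lam 0 1); (4, Mu 0); (3, Lam 0 2); (2, Lam 0 1); (1, Mu 0); (3, Lam 1 2); (2, Mu 1); (3, Mu 2); (3, Eta 0); (2, Lam 0 1); (1, Mu 0); (0, Lam 0 2); (1, Lam 1 2); (2, Mu 2)] [0; 1; 2] [(2, Eta 0); (1, Lam 0 1); (0, Mu 0); (0, Eta 2); (0, Lam 0 2); (1, Lam 1 2); (2, Mu 2); (2, Eta 0); (1, Lam 0 1); (0, Mu 0); (0, Eta 2); (0, Lam 0 2); (1, Lam 1 2); (2, Mu 2)] [(2, Eta 0); (1, Lam 0 1); (0, Mu 0); (0, Eta 2); (0, Lam 0 2); (1, Lam 1 2); (2, Mu 2)] [(1, Eta 0); (1, Eta 1); (1, Lam 0 1); (0, Mu 0); (4, Eta 0); (4, Eta 1); (4, Lam 0 1); (3, Mu 0); (2, Lam 0 2); (1, Lam 0 1); (0, Mu 0); (2, Lam 1 2); (1,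 Mu 1); (2, Mu 2)] [] 0); [vm_compute; reflexivity | exact r_T1]. }
  transitivity (I [0; 2; 0; 2] [(0, Eta 2); (2, Eta 0); (2, Eta 1); (2, Lam 0 1); (1, Mu 0); (5, Eta 0); (5, Eta 1); (5, Lam 0 1); (4, Mu 0); (3, Lam 0 2); (2, Lam 0 1); (1, Mu 0); (0, Lam 0 2); (3, Lam 1 2); (2, Mu 1); (1, Lam 1 2); (3, Mu 2); (2, Mu 2)]). { apply (step_ok' [0; 2; 0; 2] _ [(0, Eta 2); (2, Eta 0); (2, Eta 1); (2, Lam 0 1); (1, Mu 0); (5, Eta 0); (5, Eta 1); (5, Lam 0 1); (4, Mu 0); (3, Lam 0 2); (2, Lam 0 1); (1, Mu 0); (0, Lam 0 2); (3, Lam 1 2); (2, Mu 1); (1, Lam 1 2); (3, Mu 2); (2, Mu 2)] [0; 1; 0; 1] [(1, Lam 0 1); (2, Mu 1); (0, Mu 0); (2, Eta 0); (1, Lam 0 1); (0, Mu 0)] [(1, Lam 0 1); (2, Mu 1); (0, Mu 0)] [(0, Eta 2); (2, Eta 0); (2, Eta 1); (2, Lam 0 1); (1, Mu 0); (5, Eta 0); (5, Eta 1); (5, Lam 0 1); (4, Mu 0); (3, Lam 0 2); (4, Lam 1 2); (5, Mu 2)] [(0, Lam 0 2); (1, Lam 1 2); (2, Mu 2)] 1); [vm_compute; reflexivity | exact r_g5_01]. }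
  apply conv_ok'; vm_compute; reflexivity.
Qed.

Lemma r_inner : I [0; 0; 1; 2; 2] [(1, Eta 1); (2, Eta 0); (1, Lam 0 1); (0, Mu 0); (2, Eta 2); (2, Lam 0 2); (3, Lam 1 2); (4, Mu 2); (1, Lam 0 1); (2, Mu 1); (0, Mu 0); (2, Mu 2); (0, Eta 2); (0, Lam 0 2); (1, Lam 1 2); (2, Mu 2)] = I [0; 0; 1; 2; 2] [(1, Eta 1); (2, Eta 0); (1, Lam 0 1); (0, Mu 0); (1, Lam 0 1); (2, Mu 1); (0, Mu 0); (2, Mu 2); (0, Eta 2); (0, Lam 0 2); (1, Lam 1 2); (2, Mu 2)].
Proof.
  transitivity (I [0; 0; 1; 2; 2] [(0, Eta 2); (2, Eta 0); (2, Eta 1); (2, Lam 0 1); (1, Mu 0); (3, Eta 2); (3, Lam 0 2); (2, Lam 0 1); (1, Mu 0); (0, Lam 0 2); (3, Lam 1 2); (2, Mu 1); (1, Lam 1 2); (4, Mu 2); (3, Mu 2); (2, Mu 2)]). { apply (step_ok' [0; 0; 1; 2; 2] _ [(0, Eta 2); (2, Eta 0); (2, Eta 1); (2, Lam 0 1); (1, Mu 0); (3, Eta 2); (3, Lam 0 2); (2, Lam 0 1); (1, Mu 0); (0, Lam 0 2); (3, Lam 1 2); (2, Mu 1); (1, Lam 1 2); (4, Mu 2); (3, Mu 2); (2, Mu 2)] [2; 2; 2] [(0, Mu 2); (0, Mu 2)] [(1, Mu 2); (0, Mu 2)] [(0, Eta 2); (2, Eta 0); (2, Eta 1); (2, Lam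 0 1); (1, Mu 0); (3, Eta 2); (3, Lam 0 2); (2, Lam 0 1); (1, Mu 0); (0, Lam 0 2); (3, Lam 1 2); (2, Mu 1); (1, Lam 1 2)] [(2, Mu 2)] 3); [vm_compute; reflexivity | exact r_ass2]. }
  transitivity (I [0; 0; 1; 2; 2] [(0, Eta 2); (2, Eta 0); (2, Eta 1); (2, Lam 0 1); (1, Mu 0); (0, Lam 0 2); (1, Lam 1 2); (3, Eta 2); (3, Lam 0 2); (2, Lam 0 2); (1, Lam 0 1); (0, Mu 0); (3, Lam 1 2); (2, Lam 1 2); (1, Mu 1); (4, Mu 2); (3, Mu 2); (2, Mu 2)]). { apply (step_ok' [0; 0; 1; 2; 2] _ [(0, Eta 2); (2, Eta 0); (2, Eta 1); (2, Lam 0 1); (1, Mu 0); (0, Lam 0 2); (1, Lam 1 2); (3, Eta 2); (3, Lam 0 2); (2, Lam 0 2); (1, Lam 0 1); (0, Mu 0); (3, Lam 1 2); (2, Lam 1 2); (1, Mu 1); (4, Mu 2); (3, Mu 2); (2, Mu 2)] [2; 0; 1; 0; 1] [(2, Lam 0 1); (3, Mu 1); (1, Mu 0); (0, Lam 0 2); (1, Lam 1 2)] [(0, Lam 0 2); (1, Lam 1 2); (2, Lam 0 2); (3, Lam 1 2); (1, Lam 0 1); (2, Mu 1); (0, Mu 0)] [(0, Eta 2); (2, Eta 0); (2, Eta 1); (2, Lam 0 1); (1, Mu 0); (3, Eta 2); (3, Lam 0 2); (4, Lam 1 2); (6, Mu 2); (5, Mu 2)] [(2, Mu 2)] 0); [vm_compute;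 reflexivity | exact r_W2L]. }
  transitivity (I [0; 0; 1; 2; 2] [(0, Eta 2); (2, Eta 0); (2, Eta 1); (2, Lam 0 1); (1, Mu 0); (0, Lam 0 2); (1, Lam 1 2); (2, Lam 0 2); (1, Lam 0 1); (0, Mu 0); (2, Lam 1 2); (1, Mu 1); (3, Mu 2); (2, Mu 2)]). { apply (step_ok' [0; 0; 1; 2; 2] _ [(0, Eta 2); (2, Eta 0); (2, Eta 1); (2, Lam 0 1); (1, Mu 0); (0, Lam 0 2); (1, Lam 1 2); (2, Lam 0 2); (1, Lam 0 1); (0, Mu 0); (2, Lam 1 2); (1, Mu 1); (3, Mu 2); (2, Mu 2)] [0; 1; 2; 0; 1; 2] [(3, Eta 2); (3, Lam 0 2); (4, Lam 1 2); (5, Mu 2); (2, Lam 0 2); (1, Lam 0 1); (3, Lam 1 2); (4, Mu 2); (2, Mu 1); (0, Mu 0)] [(2, Lam 0 2); (1, Lam 0 1); (3, Lam 1 2); (4, Mu 2); (2, Mu 1); (0, Mu 0)] [(0, Eta 2); (2, Eta 0); (2, Eta 1); (2, Lam 0 1); (1, Mu 0); (0, Lam 0 2); (1, Lam 1 2); (5, Mu 2)] [] 0); [vm_compute; reflexivity | exact r_alpha]. }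
  transitivity (I [0; 0; 1; 2; 2] [(0, Eta 2); (2, Eta 0); (2, Eta 1); (2, Lam 0 1); (1, Mu 0); (2, Lam 0 1); (1, Mu 0); (0, Lam 0 2); (2, Mu 1); (1, Lam 1 2); (3, Mu 2); (2, Mu 2)]). { apply (step_ok' [0; 0; 1; 2; 2] _ [(0, Eta 2); (2, Eta 0); (2, Eta 1); (2, Lam 0 1); (1, Mu 0); (2, Lam 0 1); (1, Mu 0); (0, Lam 0 2); (2, Mu 1); (1, Lam 1 2); (3, Mu 2); (2, Mu 2)] [2; 0; 1; 0; 1] [(0, Lam 0 2); (1, Lam 1 2); (2, Lam 0 2); (3, Lam 1 2); (1, Lam 0 1); (2, Mu 1); (0, Mu 0)] [(2, Lam 0 1); (3, Mu 1); (1, Mu 0); (0, Lam 0 2); (1, Lam 1 2)] [(0, Eta 2); (2, Eta 0); (2, Eta 1); (2, Lam 0 1); (1, Mu 0); (5, Mu 2)] [(2, Mu 2)] 0); [vm_compute; reflexivity | exact (eq_sym r_W2L)]. }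
  apply conv_ok'; vm_compute; reflexivity.
Qed.

Lemma r_T4c : I [0; 2; 0; 2] [(3, Eta 1); (4, Eta 0); (3, Lam 0 1); (2, Mu 0); (1, Eta 1); (2, Eta 0); (1, Lam 0 1); (0, Mu 0); (2, Lam 0 2); (1, Lam 0 1); (3, Lam 1 2); (4, Mu 2); (2, Mu 1); (0, Mu 0); (0, Eta 2); (0, Lam 0 2); (1, Lam 1 2); (2, Mu 2)] = I [0; 2; 0; 2] [(1, Lam 0 2); (2, Eta 1); (3, Eta 0); (2, Lam 0 1); (1, Mu 0); (1, Eta 1); (2, Eta 0); (1, Lam 0 1); (0, Mu 0); (1, Lam 0 1); (2, Mu 1); (0, Mu 0); (2, Mu 2); (0, Eta 2); (0, Lam 0 2); (1, Lam 1 2); (2, Mu 2)].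
Proof.
  transitivity (I [0; 2; 0; 2] [(0, Eta 2); (2, Eta 0); (2, Eta 1); (2, Lam 0 1); (1, Mu 0); (3, Eta 2); (4, Lam 0 2); (5, Eta 0); (5, Eta 1); (5, Lam 0 1); (4, Mu 0); (3, Lam 0 2); (2, Lam 0 1); (1, Mu 0); (0, Lam 0 2); (3, Lam 1 2); (2, Mu 1); (1, Lam 1 2); (3, Mu 2); (3, Mu 2); (2, Mu 2)]). { apply (step_ok' [0; 2; 0; 2] _ [(0, Eta 2); (2, Eta 0); (2, Eta 1); (2, Lam 0 1); (1, Mu 0); (3, Eta 2); (4, Lam 0 2); (5, Eta 0); (5, Eta 1); (5, Lam 0 1); (4, Mu 0); (3, Lam 0 2); (2, Lam 0 1); (1, Mu 0); (0, Lam 0 2); (3, Lam 1 2); (2, Mu 1); (1, Lam 1 2); (3, Mu 2); (3, Mu 2); (2, Mu 2)] [2; 0] [(2, Eta 1); (3, Eta 0); (2, Lam 0 1); (1, Mu 0); (0, Lam 0 2); (1, Lam 1 2)] [(0, Lam 0 2); (1, Eta 1); (2, Eta 0); (1, Lam 0 1); (0, Mu 0); (0, Eta 2); (0, Lam 0 2); (1, Lam 1 2); (2, Mu 2)] [(0, Eta 2); (2, Eta 0); (2, Eta 1); (2, Lam 0 1); (1, Mu 0)] [(2, Lam 0 1); (1, Mu 0); (0, Lam 0 2); (2, Mu 1); (1, Lam 1 2); (3, Mu 2); (2, Mu 2)] 3); [vm_compute; reflexivity | exact r_compat]. }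
  transitivity (I [0; 2; 0; 2] [(0, Eta 2); (2, Eta 0); (2, Eta 1); (2, Lam 0 1); (1, Mu 0); (3, Lam 0 2); (4, Mu 2); (4, Eta 0); (4, Eta 1); (4, Lam 0 1); (3, Mu 0); (2, Lam 0 1); (1, Mu 0); (0, Lam 0 2); (2, Mu 1); (1, Lam 1 2); (2, Mu 2)]). { apply (step_ok' [0; 2; 0; 2] _ [(0, Eta 2); (2, Eta 0); (2, Eta 1); (2, Lam 0 1); (1, Mu 0); (3, Lam 0 2); (4, Mu 2); (4, Eta 0); (4, Eta 1); (4, Lam 0 1); (3, Mu 0); (2, Lam 0 1); (1, Mu 0); (0, Lam 0 2); (2, Mu 1); (1, Lam 1 2); (2, Mu 2)] [0; 0; 1; 2; 2] [(1, Eta 1); (2, Eta 0); (1, Lam 0 1); (0, Mu 0); (2, Eta 2); (2, Lam 0 2); (3, Lam 1 2); (4, Mu 2); (1, Lam 0 1); (2, Mu 1); (0, Mu 0); (2, Mu 2); (0, Eta 2); (0, Lam 0 2); (1, Lam 1 2); (2, Mu 2)] [(1, Eta 1); (2, Eta 0); (1, Lam 0 1); (0, Mu 0); (1, Lam 0 1); (2, Mu 1); (0, Mu 0); (2, Mu 2); (0, Eta 2); (0, Lam 0 2); (1, Lam 1 2); (2, Mu 2)] [(1, Lam 0 2); (2, Eta 0); (2, Eta 1); (2, Lam 0 1); (1, Mu 0)] [] 0); [vm_compute; reflexivity | exact r_inner]. }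
  apply conv_ok'; vm_compute; reflexivity.
Qed.

Lemma r_T4 : I [0; 2; 0; 2] [(1, Lam 0 2); (2, Mu 2); (0, Mu 0); (1, Eta 1); (2, Eta 0); (1, Lam 0 1); (0, Mu 0); (0, Eta 2); (0, Lam 0 2); (1, Lam 1 2); (2, Mu 2)] = I [0; 2; 0; 2] [(3, Eta 1); (4, Eta 0); (3, Lam 0 1); (2, Mu 0); (2, Eta 2); (2, Lam 0 2); (3, Lam 1 2); (4, Mu 2); (1, Eta 1); (2, Eta 0); (1, Lam 0 1); (0, Mu 0); (0, Eta 2); (0, Lam 0 2); (1, Lam 1 2); (2, Mu 2); (2, Lam 0 2); (1, Lam 0 1); (3, Lam 1 2); (4, Mu 2); (2, Mu 1); (0, Mu 0); (2, Eta 0); (1, Lam 0 1); (0, Mu 0); (0, Eta 2); (0, Lam 0 2); (1, Lam 1 2); (2, Mu 2)].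
Proof.
  transitivity (I [0; 2; 0; 2] [(0, Eta 2); (2, Eta 0); (2, Eta 1); (2, Lam 0 1); (1, Mu 0); (3, Lam 0 2); (4, Mu 2); (4, Eta 0); (4, Eta 1); (4, Lam 0 1); (3, Mu 0); (2, Lam 0 1); (1, Mu 0); (0, Lam 0 2); (2, Mu 1); (1, Lam 1 2); (2, Mu 2)]). { apply (step_ok' [0; 2; 0; 2] _ [(0, Eta 2); (2, Eta 0); (2, Eta 1); (2, Lam 0 1); (1, Mu 0); (3, Lam 0 2); (4, Mu 2); (4, Eta 0); (4, Eta 1); (4, Lam 0 1); (3, Mu 0); (2, Lam 0 1); (1, Mu 0); (0, Lam 0 2); (2, Mu 1); (1, Lam 1 2); (2, Mu 2)] [0; 2; 0; 2] [(1, Lam 0 2); (2, Mu 2); (0, Mu 0); (1, Eta 1); (2, Eta 0); (1, Lam 0 1); (0, Mu 0); (0, Eta 2); (0, Lam 0 2); (1, Lam 1 2); (2, Mu 2)] [(1, Lam 0 2); (2, Eta 1); (3, Eta 0); (2, Lam 0 1); (1, Mu 0); (1, Eta 1); (2, Eta 0); (1, Lam 0 1); (0, Mu 0); (1, Lam 0 1); (2, Mu 1); (0, Mu 0); (2, Mu 2); (0, Eta 2); (0, Lam 0 2); (1, Lam 1 2); (2, Mu 2)] [] [] 0); [vm_compute; reflexivity | exact r_T4a]. }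
  transitivity (I [0; 2; 0; 2] [(0, Eta 2); (2, Eta 0); (2, Eta 1); (2, Lam 0 1); (1, Mu 0); (5, Eta 0); (5, Eta 1); (5, Lam 0 1); (4, Mu 0); (3, Lam 0 2); (2, Lam 0 1); (1, Mu 0); (0, Lam 0 2); (3, Lam 1 2); (2, Mu 1); (1, Lam 1 2); (3, Mu 2); (2, Mu 2)]). { apply (step_ok' [0; 2; 0; 2] _ [(0, Eta 2); (2, Eta 0); (2, Eta 1); (2, Lam 0 1); (1, Mu 0); (5, Eta 0); (5, Eta 1); (5, Lam 0 1); (4, Mu 0); (3, Lam 0 2); (2, Lam 0 1); (1, Mu 0); (0, Lam 0 2); (3, Lam 1 2); (2, Mu 1); (1, Lam 1 2); (3, Mu 2); (2, Mu 2)] [0; 2; 0; 2] [(1, Lam 0 2); (2, Eta 1); (3, Eta 0); (2, Lam 0 1); (1, Mu 0); (1, Eta 1); (2, Eta 0); (1, Lam 0 1); (0, Mu 0); (1, Lam 0 1); (2, Mu 1); (0, Mu 0); (2, Mu 2); (0, Eta 2); (0, Lam 0 2); (1, Lam 1 2); (2, Mu 2)] [(3, Eta 1); (4, Eta 0); (3, Lam 0 1); (2, Mu 0); (1, Eta 1); (2, Eta 0); (1, Lam 0 1); (0, Mu 0); (2, Lam 0 2); (1, Lam 0 1); (3, Lam 1 2); (4, Mu 2); (2, Mu 1); (0, Mu 0); (0, Eta 2); (0, Lam 0 2); (1, Lam 1 2); (2, Mu 2)] [] [] 0); [vm_compute; reflexivity | exact (eq_sym r_T4c)]. }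
  transitivity (I [0; 2; 0; 2] [(0, Eta 2); (0, Eta 2); (3, Eta 0); (3, Eta 1); (3, Lam 0 1); (2, Mu 0); (1, Lam 0 2); (2, Lam 1 2); (3, Mu 2); (4, Eta 2); (6, Eta 0); (6, Eta 1); (6, Lam 0 1); (5, Mu 0); (4, Lam 0 2); (3, Lam 0 2); (2, Lam 0 1); (1, Mu 0); (4, Lam 1 2); (3, Lam 1 2); (2, Mu 1); (3, Eta 0); (2, Lam 0 1); (1, Mu 0); (0, Lam 0 2); (1, Lam 1 2); (4, Mu 2); (3, Mu 2); (2, Mu 2)]). { apply (step_ok' [0; 2; 0; 2] _ [(0, Eta 2); (0, Eta 2); (3, Eta 0); (3, Eta 1); (3, Lam 0 1); (2, Mu 0); (1, Lam 0 2); (2, Lam 1 2); (3, Mu 2); (4, Eta 2); (6, Eta 0); (6, Eta 1); (6, Lam 0 1); (5, Mu 0); (4, Lam 0 2); (3, Lam 0 2); (2, Lam 0 1); (1, Mu 0); (4, Lam 1 2); (3, Lam 1 2); (2, Mu 1); (3, Eta 0); (2, Lam 0 1); (1, Mu 0); (0, Lam 0 2); (1, Lam 1 2); (4, Mu 2); (3, Mu 2); (2, Mu 2)] [0; 2; 0; 2] [(3, Eta 1); (4, Eta 0); (3, Lam 0 1); (2, Mu 0); (1, Eta 1); (2, Eta 0); (1, Lam 0 1); (0, Mu 0); (2, Lam 0 2); (1, Lam 0 1); (3, Lam 1 2); (4, Mu 2); (2, Mu 1); (0, Mu 0); (0, Eta 2); (0, Lam 0 2); (1, Lam 1 2); (2,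 Mu 2)] [(3, Eta 1); (4, Eta 0); (3, Lam 0 1); (2, Mu 0); (2, Eta 2); (2, Lam 0 2); (3, Lam 1 2); (4, Mu 2); (1, Eta 1); (2, Eta 0); (1, Lam 0 1); (0, Mu 0); (0, Eta 2); (0, Lam 0 2); (1, Lam 1 2); (2, Mu 2); (2, Lam 0 2); (1, Lam 0 1); (3, Lam 1 2); (4, Mu 2); (2, Mu 1); (0, Mu 0); (2, Eta 0); (1, Lam 0 1); (0, Mu 0); (0, Eta 2); (0, Lam 0 2); (1, Lam 1 2); (2, Mu 2)] [] [] 0); [vm_compute; reflexivity | exact (eq_sym r_T4b)]. }
  apply conv_ok'; vm_compute; reflexivity.
Qed.

Lemma r_F1 : I [0; 2] [(1, Eta 1); (2, Eta 0); (1, Lam 0 1); (0, Mu 0); (0, Eta 2); (0, Lam 0 2); (1, Lam 1 2); (2, Mu 2); (2, Eta 0); (1, Lam 0 1); (0, Mu 0); (0, Eta 2); (0, Lam 0 2); (1, Lam 1 2); (2, Mu 2)] = I [0; 2] [(1, Eta 1); (2, Eta 0); (1, Lam 0 1); (0, Mu 0); (0, Eta 2); (0, Lam 0 2); (1, Lam 1 2); (2, Mu 2)].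
Proof.
  transitivity (I [0; 2] [(0, Eta 2); (2, Eta 0); (2, Eta 1); (2, Lam 0 1); (1, Mu 0); (0, Lam 0 2); (1, Lam 1 2); (2, Mu 2)]). { apply (step_ok' [0; 2] _ [(0, Eta 2); (2, Eta 0); (2, Eta 1); (2, Lam 0 1); (1, Mu 0); (0, Lam 0 2); (1, Lam 1 2); (2, Mu 2)] [0; 1; 2] [(2, Eta 0); (1, Lam 0 1); (0, Mu 0); (0, Eta 2); (0, Lam 0 2); (1, Lam 1 2); (2, Mu 2); (2, Eta 0); (1, Lam 0 1); (0, Mu 0); (0, Eta 2); (0, Lam 0 2); (1, Lam 1 2); (2, Mu 2)] [(2, Eta 0); (1, Lam 0 1); (0, Mu 0); (0, Eta 2); (0, Lam 0 2); (1, Lam 1 2); (2, Mu 2)] [(1, Eta 1)] [] 0); [vm_compute; reflexivity | exact r_T1]. }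
  apply conv_ok'; vm_compute; reflexivity.
Qed.

Lemma r_F6 : I [0; 2; 0; 2] [(1, Lam 0 2); (2, Mu 2); (0, Mu 0); (1, Eta 1); (2, Eta 0); (1, Lam 0 1); (0, Mu 0); (0, Eta 2); (0, Lam 0 2); (1, Lam 1 2); (2, Mu 2)] = I [0; 2; 0; 2] [(3, Eta 1); (4, Eta 0); (3, Lam 0 1); (2, Mu 0); (2, Eta 2); (2, Lam 0 2); (3, Lam 1 2); (4, Mu 2); (2, Eta 0); (1, Lam 0 2); (0, Mu 0); (4, Eta 0); (3, Lam 0 1); (2, Mu 0); (2, Eta 2); (2, Lam 0 2); (3, Lam 1 2); (4, Mu 2); (1, Eta 1); (2, Eta 0); (1, Lam 0 1); (0, Mu 0); (0, Eta 2); (0, Lam 0 2); (1, Lam 1 2); (2, Mu 2); (2, Lam 0 2); (1, Lam 0 1); (3, Lam 1 2); (4, Mu 2); (2, Mu 1); (0, Mu 0); (2, Eta 0); (1, Lam 0 1); (0, Mu 0); (0, Eta 2); (0, Lam 0 2); (1, Lam 1 2); (2, Mu 2)].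
Proof.
  transitivity (I [0; 2; 0; 2] [(0, Eta 2); (0, Eta 2); (3, Eta 0); (3, Eta 1); (3, Lam 0 1); (2, Mu 0); (1, Lam 0 2); (2, Lam 1 2); (3, Mu 2); (4, Eta 2); (6, Eta 0); (6, Eta 1); (6, Lam 0 1); (5, Mu 0); (4, Lam 0 2); (3, Lam 0 2); (2, Lam 0 1); (1, Mu 0); (4, Lam 1 2); (3, Lam 1 2); (2, Mu 1); (3, Eta 0); (2, Lam 0 1); (1, Mu 0); (0, Lam 0 2); (1, Lam 1 2); (4, Mu 2); (3, Mu 2); (2, Mu 2)]). { apply (step_ok' [0; 2; 0; 2] _ [(0, Eta 2); (0, Eta 2); (3, Eta 0); (3, Eta 1); (3, Lam 0 1); (2, Mu 0); (1, Lam 0 2); (2, Lam 1 2); (3, Mu 2); (4, Eta 2); (6, Eta 0); (6, Eta 1); (6, Lam 0 1); (5, Mu 0); (4, Lam 0 2); (3, Lam 0 2); (2, Lam 0 1); (1, Mu 0); (4, Lam 1 2); (3, Lam 1 2); (2, Mu 1); (3, Eta 0); (2, Lam 0 1); (1, Mu 0); (0, Lam 0 2); (1, Lam 1 2); (4, Mu 2); (3, Mu 2); (2, Mu 2)] [0; 2; 0; 2] [(1, Lam 0 2); (2, Mu 2); (0, Mu 0); (1, Eta 1); (2, Eta 0); (1, Lam 0 1); (0, Mu 0); (0, Eta 2); (0, Lam 0 2); (1, Lam 1 2); (2, Mu 2)] [(3, Eta 1); (4, Eta 0); (3, Lam 0 1); (2, Mu 0); (2, Eta 2); (2, Lam 0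 2); (3, Lam 1 2); (4, Mu 2); (1, Eta 1); (2, Eta 0); (1, Lam 0 1); (0, Mu 0); (0, Eta 2); (0, Lam 0 2); (1, Lam 1 2); (2, Mu 2); (2, Lam 0 2); (1, Lam 0 1); (3, Lam 1 2); (4, Mu 2); (2, Mu 1); (0, Mu 0); (2, Eta 0); (1, Lam 0 1); (0, Mu 0); (0, Eta 2); (0, Lam 0 2); (1, Lam 1 2); (2, Mu 2)] [] [] 0); [vm_compute; reflexivity | exact r_T4]. }
  transitivity (I [0; 2; 0; 2] [(0, Eta 2); (0, Eta 2); (3, Eta 0); (3, Eta 1); (3, Lam 0 1); (2, Mu 0); (1, Lam 0 2); (2, Lam 1 2); (3, Mu 2); (4, Eta 2); (4, Eta 2); (7, Eta 0); (7, Eta 1); (7, Lam 0 1); (6, Mu 0); (5, Lam 0 2); (6, Lam 1 2); (7, Mu 2); (7, Eta 0); (6, Lam 0 1); (5, Mu 0); (4, Lam 0 2); (3, Lam 0 2); (2, Lam 0 1); (1, Mu 0); (4, Lam 1 2); (3, Lam 1 2); (2, Mu 1); (3, Eta 0); (2, Lam 0 1); (1, Mu 0); (0, Lam 0 2); (1, Lam 1 2); (4, Mu 2); (3, Mu 2); (2, Mu 2)]). { apply (step_ok' [0; 2; 0; 2] _ [(0, Eta 2); (0, Eta 2); (3, Eta 0); (3, Eta 1); (3, Lam 0 1); (2, Mu 0); (1, Lam 0 2); (2, Lam 1 2); (3, Mu 2); (4, Eta 2); (4, Eta 2); (7, Eta 0); (7, Eta 1); (7, Lam 0 1); (6, Mu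 0); (5, Lam 0 2); (6, Lam 1 2); (7, Mu 2); (7, Eta 0); (6, Lam 0 1); (5, Mu 0); (4, Lam 0 2); (3, Lam 0 2); (2, Lam 0 1); (1, Mu 0); (4, Lam 1 2); (3, Lam 1 2); (2, Mu 1); (3, Eta 0); (2, Lam 0 1); (1, Mu 0); (0, Lam 0 2); (1, Lam 1 2); (4, Mu 2); (3, Mu 2); (2, Mu 2)] [0; 1; 2] [(2, Eta 0); (1, Lam 0 1); (0, Mu 0); (0, Eta 2); (0, Lam 0 2); (1, Lam 1 2); (2, Mu 2)] [(2, Eta 0); (1, Lam 0 1); (0, Mu 0); (0, Eta 2); (0, Lam 0 2); (1, Lam 1 2); (2, Mu 2); (2, Eta 0); (1, Lam 0 1); (0, Mu 0); (0, Eta 2); (0, Lam 0 2); (1, Lam 1 2); (2, Mu 2)] [(0, Eta 2); (0, Eta 2); (3, Eta 0); (3, Eta 1); (3, Lam 0 1); (2, Mu 0); (1, Lam 0 2); (2, Lam 1 2); (3, Mu 2); (5, Eta 1)] [(3, Lam 0 2); (2, Lam 0 1); (1, Mu 0); (3, Lam 1 2); (2, Mu 1); (3, Eta 0); (2, Lam 0 1); (1, Mu 0); (0, Lam 0 2); (1, Lam 1 2); (3, Mu 2); (2, Mu 2)] 4); [vm_compute; reflexivity | exact (eq_sym r_T1)]. }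
  transitivity (I [0; 2; 0; 2] [(0, Eta 2); (0, Eta 2); (4, Eta 0); (3, Lam 0 2); (2, Mu 0); (3, Eta 0); (3, Eta 1); (3, Lam 0 1); (2, Mu 0); (1, Lam 0 2); (2, Lam 1 2); (3, Mu 2); (4, Eta 2); (4, Eta 2); (7, Eta 0); (7, Eta 1); (7, Lam 0 1); (6, Mu 0); (5, Lam 0 2); (6, Lam 1 2); (7, Mu 2); (7, Eta 0); (6, Lam 0 1); (5, Mu 0); (4, Lam 0 2); (3, Lam 0 2); (2, Lam 0 1); (1, Mu 0); (4, Lam 1 2); (3, Lam 1 2); (2, Mu 1); (3, Eta 0); (2, Lam 0 1); (1, Mu 0); (0, Lam 0 2); (1, Lam 1 2); (4, Mu 2); (3, Mu 2); (2, Mu 2)]). { apply (step_ok' [0; 2; 0; 2] _ [(0, Eta 2); (0, Eta 2); (4, Eta 0); (3, Lam 0 2); (2, Mu 0); (3, Eta 0); (3, Eta 1); (3, Lam 0 1); (2, Mu 0); (1, Lam 0 2); (2, Lam 1 2); (3, Mu 2); (4, Eta 2); (4, Eta 2); (7, Eta 0); (7, Eta 1); (7, Lam 0 1); (6, Mu 0); (5, Lam 0 2); (6, Lam 1 2); (7, Mu 2); (7, Eta 0); (6, Lam 0 1); (5, Mu 0); (4, Lam 0 2); (3, Lam 0 2); (2, Lam 0 1); (1, Mu 0); (4, Lam 1 2); (3, Lam 1 2); (2, Mu 1); (3, Eta 0); (2, Lam 0 1); (1, Mu 0); (0, Lam 0 2); (1, Lam 1 2); (4, Mu 2); (3, Mu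 2); (2, Mu 2)] [0; 2] [(1, Eta 1); (2, Eta 0); (1, Lam 0 1); (0, Mu 0); (0, Eta 2); (0, Lam 0 2); (1, Lam 1 2); (2, Mu 2)] [(2, Eta 0); (1, Lam 0 2); (0, Mu 0); (1, Eta 1); (2, Eta 0); (1, Lam 0 1); (0, Mu 0); (0, Eta 2); (0, Lam 0 2); (1, Lam 1 2); (2, Mu 2)] [(0, Eta 2); (3, Eta 2); (3, Eta 2); (6, Eta 0); (6, Eta 1); (6, Lam 0 1); (5, Mu 0); (4, Lam 0 2); (5, Lam 1 2); (6, Mu 2); (6, Eta 0); (5, Lam 0 1); (4, Mu 0); (3, Lam 0 2); (4, Lam 1 2); (5, Mu 2)] [(3, Lam 0 2); (2, Lam 0 1); (1, Mu 0); (3, Lam 1 2); (2, Mu 1); (3, Eta 0); (2, Lam 0 1); (1, Mu 0); (0, Lam 0 2); (1, Lam 1 2); (3, Mu 2); (2, Mu 2)] 1); [vm_compute; reflexivity | exact (eq_sym r_T2)]. }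
  apply conv_ok'; vm_compute; reflexivity.
Qed.


Ltac unf := unfold mult012, unit012, phi1_02, mult02, unit02, lbar012, larrow012, lbar01, lbar02, wdl_idem.
Ltac fin w X lem Y :=
  transitivity (I w X); [apply conv_ok'; vm_compute; reflexivity|];
  rewrite lem; apply conv_ok'; vm_compute; reflexivity.

Lemma C_phi : phi1_02 D = I [0;2] [(1, Eta 1); (2, Eta 0); (1, Lam 0 1); (0, Mu 0); (0, Eta 2); (0, Lam 0 2); (1, Lam 1 2); (2, Mu 2)].
Proof. unf. reify. apply conv_ok'; vm_compute; reflexivity. Qed.

Lemma L_src : src (phi1_02 D) = comp1 (s0 D) (s2 D).
Proof.
  rewrite C_phi. destruct (interp_good K A hS bS ac Hlet Hatom [0;2] [(1, Eta 1); (2, Eta 0); (1, Lam 0 1); (0, Mu 0); (0, Eta 2); (0, Lam 0 2); (1, Lam 1 2); (2, Mu 2)] eq_refl) as [((S & _) & _) _].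
  exact S.
Qed.
Lemma L_tgt : tgt (phi1_02 D) = comp1 (s0 D) (comp1 (s1 D) (s2 D)).
Proof.
  rewrite C_phi. destruct (interp_good K A hS bS ac Hlet Hatom [0;2] [(1, Eta 1); (2, Eta 0); (1, Lam 0 1); (0, Mu 0); (0, Eta 2); (0, Lam 0 2); (1, Lam 1 2); (2, Mu 2)] eq_refl) as [((_ & T) & _) _].
  exact T.
Qed.
Lemma L_F1 : vcomp (lbar012 D) (phi1_02 D) = phi1_02 D.
Proof. unf. reify. fin [0;2] [(1, Eta 1); (2, Eta 0); (1, Lam 0 1); (0, Mu 0); (0, Eta 2); (0, Lam 0 2); (1, Lam 1 2); (2, Mu 2); (2, Eta 0); (1, Lam 0 1); (0, Mu 0); (0, Eta 2); (0, Lam 0 2); (1, Lam 1 2); (2, Mu 2)] r_F1 [(1, Eta 1); (2, Eta 0); (1, Lam 0 1); (0, Mu 0); (0, Eta 2); (0, Lam 0 2); (1, Lam 1 2); (2, Mu 2)]. Qed.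
Lemma L_T2 : vcomp (phi1_02 D) (lbar02 D) = phi1_02 D.
Proof. unf. reify. fin [0;2] [(2, Eta 0); (1, Lam 0 2); (0, Mu 0); (1, Eta 1); (2, Eta 0); (1, Lam 0 1); (0, Mu 0); (0, Eta 2); (0, Lam 0 2); (1, Lam 1 2); (2, Mu 2)] r_T2 [(1, Eta 1); (2, Eta 0); (1, Lam 0 1); (0, Mu 0); (0, Eta 2); (0, Lam 0 2); (1, Lam 1 2); (2, Mu 2)]. Qed.
Lemma L_T4 : vcomp (phi1_02 D) (mult02 D) = vcomp (mult012 D) (hcomp (phi1_02 D) (phi1_02 D)).
Proof. unf. reify. fin [0;2;0;2] [(1, Lam 0 2); (2, Mu 2); (0, Mu 0); (1, Eta 1); (2, Eta 0); (1, Lam 0 1); (0, Mu 0); (0, Eta 2); (0, Lam 0 2); (1, Lam 1 2); (2, Mu 2)] r_T4 [(3, Eta 1); (4, Eta 0); (3, Lam 0 1); (2, Mu 0); (2, Eta 2); (2, Lam 0 2); (3, Lam 1 2); (4, Mu 2); (1, Eta 1); (2, Eta 0); (1, Lam 0 1); (0, Mu 0); (0, Eta 2); (0, Lam 0 2); (1, Lam 1 2); (2, Mu 2); (2, Lam 0 2); (1, Lam 0 1); (3, Lam 1 2); (4, Mu 2); (2, Mu 1); (0, Mu 0); (2, Eta 0); (1, Lam 0 1); (0, Mu 0); (0, Eta 2); (0, Lam 0 2); (1, Lam 1 2); (2, Mu 2)]. Qed.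
Lemma L_T3 : vcomp (phi1_02 D) (unit02 D) = unit012 D.
Proof. unf. reify. fin (@nil nat) [(0, Eta 0); (0, Eta 2); (0, Lam 0 2); (1, Eta 1); (2, Eta 0); (1, Lam 0 1); (0, Mu 0); (0, Eta 2); (0, Lam 0 2); (1, Lam 1 2); (2, Mu 2)] r_T3 [(0, Eta 0); (0, Eta 1); (0, Eta 2); (1, Lam 0 1); (0, Lam 0 2); (1, Lam 1 2); (2, Eta 0); (1, Lam 0 1); (0, Mu 0); (0, Eta 2); (0, Lam 0 2); (1, Lam 1 2); (2, Mu 2)]. Qed.
Lemma L_F6 : vcomp (phi1_02 D) (mult02 D) =
  vcomp (mult012 D) (vcomp (hcomp (phi1_02 D) (lbar012 D)) (hcomp (lbar02 D) (phi1_02 D))).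
Proof. unf. reify. fin [0;2;0;2] [(1, Lam 0 2); (2, Mu 2); (0, Mu 0); (1, Eta 1); (2, Eta 0); (1, Lam 0 1); (0, Mu 0); (0, Eta 2); (0, Lam 0 2); (1, Lam 1 2); (2, Mu 2)] r_F6 [(3, Eta 1); (4, Eta 0); (3, Lam 0 1); (2, Mu 0); (2, Eta 2); (2, Lam 0 2); (3, Lam 1 2); (4, Mu 2); (2, Eta 0); (1, Lam 0 2); (0, Mu 0); (4, Eta 0); (3, Lam 0 1); (2, Mu 0); (2, Eta 2); (2, Lam 0 2); (3, Lam 1 2); (4, Mu 2); (1, Eta 1); (2, Eta 0); (1, Lam 0 1); (0, Mu 0); (0, Eta 2); (0, Lam 0 2); (1, Lam 1 2); (2, Mu 2); (2, Lam 0 2); (1, Lam 0 1); (3, Lam 1 2); (4, Mu 2); (2, Mu 1); (0, Mu 0); (2, Eta 0); (1, Lam 0 1); (0, Mu 0); (0, Eta 2); (0, Lam 0 2); (1, Lam 1 2); (2, Mu 2)]. Qed.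

Lemma main_inst :
  monad_hom (comp1 (s0 D) (s2 D)) (lbar02 D) (mult02 D) (unit02 D)
            (comp1 (s0 D) (comp1 (s1 D) (s2 D))) (lbar012 D) (mult012 D) (unit012 D)
            (phi1_02 D)
  /\
  mnd_1cell (comp1 (s0 D) (comp1 (s1 D) (s2 D))) (lbar012 D) (mult012 D) (unit012 D)
            (comp1 (s0 D) (s2 D)) (lbar02 D) (mult02 D) (unit02 D)
            (id1 A) (id2 (id1 A)) (phi1_02 D).
Proof.
  unfold monad_hom, mnd_1cell, bar_cell, idem.
  rewrite !hcomp_id_r, !hcomp_id_l, comp1_id_r, comp1_id_l.
  pose proof (vcomp_id_l _ _ _ (id2 (id1 A))) as Vid. rewrite tgt_id2 in Vid.
  repeat split; rewrite ?src_id2, ?tgt_id2;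
    auto using L_src, L_tgt, L_F1, L_T2, L_T4, L_T3, L_F6.
Qed.

End Inst.

Theorem lemma4p2 (K : TwoCat) (A : obj K) (D : wdl2_data A) :
  is_wdl2 D ->
  monad_hom (comp1 (s0 D) (s2 D)) (lbar02 D) (mult02 D) (unit02 D)
            (comp1 (s0 D) (comp1 (s1 D) (s2 D))) (lbar012 D) (mult012 D) (unit012 D)
            (phi1_02 D)
  /\
  mnd_1cell (comp1 (s0 D) (comp1 (s1 D) (s2 D))) (lbar012 D) (mult012 D) (unit012 D)
            (comp1 (s0 D) (s2 D)) (lbar02 D) (mult02 D) (unit02 D)
            (id1 A) (id2 (id1 A)) (phi1_02 D).
Proof. intro HW. exact (main_inst K A D HW). Qed.
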